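(* Let $C$ be a small 2-category and $NC$ its nerve. Then $NC$ is a weak 2-category if and only if every 2-cell of $C$ is invertible, and $NC$ is a weak 2-groupoid if and only if $C$ is a 2-groupoid.
   Context: A 2-category has objects, arrows and 2-cells, with vertical composition $\bullet$ of 2-cells and horizontal composition $\circ$. A 2-groupoid is a 2-category whose objects form a set, all of whose 2-cells are invertible, and in which every arrow $f\colon x\to y$ admits $g\colon y\to x$ with invertible 2-cells $fg\cong\mathrm{id}_y$, $gf\cong \mathrm{id}_x$. A normal lax functor $\phi\colon C\dashrightarrow D$ between 2-categories consists of maps on objects, arrows and 2-cells preserving sources, targets, identities and $\bullet$, together with 2-cells $\phi_{1,1}(g,f)\colon \phi(gf)\Rightarrow\phi(g)\circ\phi(f)$ for composable $g,f$, such that: $\phi_{1,1}(\mathrm{id},f)=\mathrm{id}_{\phi(f)}=\phi_{1,1}(f,\mathrm{id})$; $(\phi(\beta)\circ\phi(\alpha))\bullet\phi_{1,1}(g,f)=\phi_{1,1}(g',f')\bullet\phi(\beta\circ\alpha)$ for 2-cells $\alpha\colon f\Rightarrow f'$, $\beta\colon g\Rightarrow g'$; and $(\phi_{1,1}(h,g)\circ\phi(f))\bullet\phi_{1,1}(hg,f)=(\phi(h)\circ\phi_{1,1}(g,f))\bullet\phi_{1,1}(h,gf)$. The ordinal $[n]=\{0<1<\dots<n\}$ is viewed as a category (one arrow $i\to j$ iff $i\le j$) and as a 2-category with only identity 2-cells. The nerve $NC$ is the simplicial set with $NC_n$ the set of normal lax functors $[n]\dashrightarrow C$, with simplicial operators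 given by precomposition with order-preserving maps. For a simplicial set $X$, the horn $\Lambda^n_k\subset\Delta^n$ is the union of all faces of $\Delta^n$ except the $k$-th; it is inner if $0<k<n$. $X$ is a weak $m$-category if every map $\Lambda^n_k\to X$ with $0<k<n$ extends to $\Delta^n\to X$, uniquely when $n>m$; $X$ is a weak $m$-groupoid if the same holds for all horns $\Lambda^n_k$, $0\le k\le n$. *)

(* Defs.v *)
From mathcomp Require Import all_boot.
Set Implicit Arguments.
Unset Strict Implicit.
Unset Printing Implicit Defensive.

(* Strict (small) 2-categories, essentially-algebraic presentation.   *)
(* compA g f = g o f  (defined when tgt f = src g);                    *)
(* vcomp b a = b (vertical) a  (defined when cod2 a = dom2 b);         *)
(* hcomp b a = b (horizontal) a (defined when tgt (dom2 a) = src (dom2 b)). *)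
Record TwoCat := {
  Ob : Type; Ar : Type; Cl : Type;
  src : Ar -> Ob; tgt : Ar -> Ob;
  idA : Ob -> Ar;
  compA : Ar -> Ar -> Ar;
  dom2 : Cl -> Ar; cod2 : Cl -> Ar;
  id2 : Ar -> Cl;
  vcomp : Cl -> Cl -> Cl;
  hcomp : Cl -> Cl -> Cl;
  src_idA : forall x, src (idA x) = x;
  tgt_idA : forall x, tgt (idA x) = x;
  src_compA : forall g f, tgt f = src g -> src (compA g f) = src f;
  tgt_compA : forall g f, tgt f = src g -> tgt (compA g f) = tgt g;
  compA_idl : forall f, compA (idA (tgt f)) f = f;
  compA_idr : forall f, compA f (idA (src f)) = f;
  compA_assoc : forall h g f, tgt f = src g -> tgt g = src h ->
    compA h (compA g f) = compA (compA h g) f;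
  src_cod2 : forall a, src (cod2 a) = src (dom2 a);
  tgt_cod2 : forall a, tgt (cod2 a) = tgt (dom2 a);
  dom_id2 : forall f, dom2 (id2 f) = f;
  cod_id2 : forall f, cod2 (id2 f) = f;
  dom_vcomp : forall b a, cod2 a = dom2 b -> dom2 (vcomp b a) = dom2 a;
  cod_vcomp : forall b a, cod2 a = dom2 b -> cod2 (vcomp b a) = cod2 b;
  vcomp_idl : forall a, vcomp (id2 (cod2 a)) a = a;
  vcomp_idr : forall a, vcomp a (id2 (dom2 a)) = a;
  vcomp_assoc : forall c b a, cod2 a = dom2 b -> cod2 b = dom2 c ->
    vcomp c (vcomp b a) = vcomp (vcomp c b) a;
  dom_hcomp : forall b a, tgt (dom2 a) = src (dom2 b) ->
    dom2 (hcomp b a) = compA (dom2 b) (dom2 a);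
  cod_hcomp : forall b a, tgt (dom2 a) = src (dom2 b) ->
    cod2 (hcomp b a) = compA (cod2 b) (cod2 a);
  hcomp_id2 : forall g f, tgt f = src g ->
    hcomp (id2 g) (id2 f) = id2 (compA g f);
  hcomp_idl : forall a, hcomp (id2 (idA (tgt (dom2 a)))) a = a;
  hcomp_idr : forall a, hcomp a (id2 (idA (src (dom2 a)))) = a;
  hcomp_assoc : forall c b a, tgt (dom2 a) = src (dom2 b) ->
    tgt (dom2 b) = src (dom2 c) -> hcomp c (hcomp b a) = hcomp (hcomp c b) a;
  interchange : forall b' b a' a, cod2 a = dom2 a' -> cod2 b = dom2 b' ->
    tgt (dom2 a) = src (dom2 b) ->
    vcomp (hcomp b' a') (hcomp b a) = hcomp (vcomp b' b) (vcomp a' a)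
}.

Arguments src {_}. Arguments tgt {_}. Arguments idA {_}. Arguments compA {_}.
Arguments dom2 {_}. Arguments cod2 {_}. Arguments id2 {_}.
Arguments vcomp {_}. Arguments hcomp {_}.

Definition is_iso2 (C : TwoCat) (a : Cl C) : Prop :=
  exists b : Cl C, [/\ cod2 a = dom2 b, cod2 b = dom2 a,
    vcomp b a = id2 (dom2 a) & vcomp a b = id2 (cod2 a)].

Definition is_2groupoid (C : TwoCat) : Prop :=
  (forall a : Cl C, is_iso2 a) /\
  (forall f : Ar C, exists g : Ar C, [/\ src g = tgt f, tgt g = src f,
     (exists a : Cl C, [/\ dom2 a = compA f g, cod2 a = idA (tgt f) & is_iso2 a])
   & (exists b : Cl C, [/\ dom2 b = compA g f, cod2 b = idA (src f) & is_iso2 b])]).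

Definition mono (m n : nat) :=
  {f : 'I_m.+1 -> 'I_n.+1 | forall i j : 'I_m.+1, i <= j -> f i <= f j}.

Definition mono_fun m n (t : mono m n) : 'I_m.+1 -> 'I_n.+1 := proj1_sig t.
Coercion mono_fun : mono >-> Funclass.
Definition monoP m n (t : mono m n) : forall i j : 'I_m.+1, i <= j -> t i <= t j :=
  proj2_sig t.

Definition mono_comp m n p (t : mono m n) (s : mono p m) : mono p n :=
  exist (fun f : 'I_p.+1 -> 'I_n.+1 => forall i j : 'I_p.+1, i <= j -> f i <= f j)
    (fun i => t (s i)) (fun i j h => monoP t (monoP s h)).

(* Normal lax functors [n] -/-> C.  The arrow i -> j of [n] (i <= j) is *)
(* sent to nar i j _, and phi_{1,1}(j->k, i->j) is ncl i j k _ _.       *)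
(* 2-cells of [n] are identities, sent to identities.                   *)
Unset Implicit Arguments.
Record NLax (C : TwoCat) (n : nat) := {
  nob : 'I_n.+1 -> Ob C;
  nar : forall i j : 'I_n.+1, i <= j -> Ar C;
  ncl : forall i j k : 'I_n.+1, i <= j -> j <= k -> Cl C;
  nar_src : forall i j h, src (nar i j h) = nob i;
  nar_tgt : forall i j h, tgt (nar i j h) = nob j;
  nar_id : forall i h, nar i i h = idA (nob i);
  ncl_dom : forall i j k hij hjk hik, dom2 (ncl i j k hij hjk) = nar i k hik;
  ncl_cod : forall i j k hij hjk,
    cod2 (ncl i j k hij hjk) = compA (nar j k hjk) (nar i j hij);
  ncl_idl : forall i j hij hjj, ncl i j j hij hjj = id2 (nar i j hij);
  ncl_idr : forall i k hii hik, ncl i i k hii hik = id2 (nar i k hik);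
  ncl_nat : forall i j k hij hjk hik,
    vcomp (hcomp (id2 (nar j k hjk)) (id2 (nar i j hij))) (ncl i j k hij hjk)
    = vcomp (ncl i j k hij hjk) (id2 (nar i k hik));
  ncl_assoc : forall i j k l hij hjk hkl hjl hik,
    vcomp (hcomp (ncl j k l hjk hkl) (id2 (nar i j hij))) (ncl i j l hij hjl)
    = vcomp (hcomp (id2 (nar k l hkl)) (ncl i j k hij hjk)) (ncl i k l hik hkl)
}.

Set Implicit Arguments.
Arguments nob {C n}. Arguments nar {C n} _ _ _. Arguments ncl {C n} _ _ _ _ _.

Section Pull.
Variables (C : TwoCat) (m n : nat) (t : mono m n) (phi : NLax C n).

Definition pull : NLax C m.
Proof.
refine (@Build_NLax C m (fun i => nob phi (t i))
  (fun i j h => nar phi (t i) (t j) (monoP t h))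
  (fun i j k h1 h2 => ncl phi (t i) (t j) (t k) (monoP t h1) (monoP t h2)) _ _ _ _ _ _ _ _ _).
- by move=> i j h; apply: nar_src.
- by move=> i j h; apply: nar_tgt.
- by move=> i h; apply: nar_id.
- by move=> i j k h1 h2 h3; apply: ncl_dom.
- by move=> i j k h1 h2; apply: ncl_cod.
- by move=> i j h1 h2; apply: ncl_idl.
- by move=> i j h1 h2; apply: ncl_idr.
- by move=> i j k h1 h2 h3; apply: ncl_nat.
- by move=> i j k l h1 h2 h3 h4 h5; apply: ncl_assoc.
Defined.
End Pull.

Record sset := {
  sx : nat -> Type;
  sact : forall m n, mono m n -> sx n -> sx m
}.

Definition nerve (C : TwoCat) : sset :=
  {| sx := fun n => NLax C n; sact := fun m n t phi => pull t phi |}.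

(* the m-simplex t of Delta^n lies in the horn Lambda^n_k iff it lies in a
   face d_j with j <> k, i.e. its image misses some j <> k *)
Definition inHorn n (k : 'I_n.+1) m (t : mono m n) : bool :=
  [exists j : 'I_n.+1, (j != k) && [forall i : 'I_m.+1, t i != j]].

(* a map Lambda^n_k -> X: a natural family indexed by the simplices of the
   horn (values outside the horn are irrelevant) *)
Definition horn_map (X : sset) n (k : 'I_n.+1)
    (x : forall m, mono m n -> sx X m) : Prop :=
  forall m p (t : mono m n) (s : mono p m), inHorn k t ->
    sact s (x m t) = x p (mono_comp t s).

Definition simplex_map (X : sset) n (z : forall m, mono m n -> sx X m) : Prop :=
  forall m p (t : mono m n) (s : mono p m), sact s (z m t) = z p (mono_comp t s).

Definition extends (X : sset) n (k : 'I_n.+1)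
    (z x : forall m, mono m n -> sx X m) : Prop :=
  forall m (t : mono m n), inHorn k t -> z m t = x m t.

Definition has_filler (X : sset) n (k : 'I_n.+1) : Prop :=
  forall x : forall m, mono m n -> sx X m, horn_map k x ->
    exists z : forall m, mono m n -> sx X m, simplex_map z /\ extends k z x.

Definition unique_filler (X : sset) n (k : 'I_n.+1) : Prop :=
  forall x z z' : forall m, mono m n -> sx X m, horn_map k x ->
    simplex_map z -> extends k z x -> simplex_map z' -> extends k z' x ->
    forall m (t : mono m n), z m t = z' m t.

Definition is_weak_cat (X : sset) (m : nat) : Prop :=
  forall n (k : 'I_n.+1), 0 < k < n ->
    has_filler X k /\ (m < n -> unique_filler X k).

Definition is_weak_grpd (X : sset) (m : nat) : Prop :=
  forall n (k : 'I_n.+1), 0 < n ->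
    has_filler X k /\ (m < n -> unique_filler X k).

(* Main.v *)
From Pilot Require Import Defs.
From mathcomp Require Import all_boot.
From Stdlib Require Import FunctionalExtensionality ProofIrrelevance.
From mathcomp Require Import zify.
Import Pilot.Defs.
Set Implicit Arguments. Unset Strict Implicit. Unset Printing Implicit Defensive.


Section Basic.
Variable C : TwoCat.
Implicit Types (a b c : Cl C) (f g h : Ar C) (x y z : Ob C).
Lemma compA_idl' f x : tgt f = x -> compA (idA x) f = f.
Proof. by move<-; apply: compA_idl. Qed.
Lemma compA_idr' f x : src f = x -> compA f (idA x) = f.
Proof. by move<-; apply: compA_idr. Qed.
Lemma compA_assocr h g f : tgt f = src g -> tgt g = src h ->
  compA (compA h g) f = compA h (compA g f).
Proof. by move=> *; rewrite compA_assoc. Qed.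
Lemma vcomp_idl' a f : cod2 a = f -> vcomp (id2 f) a = a.
Proof. by move<-; apply: vcomp_idl. Qed.
Lemma vcomp_idr' a f : dom2 a = f -> vcomp a (id2 f) = a.
Proof. by move<-; apply: vcomp_idr. Qed.
Lemma hcomp_idl' a x : tgt (dom2 a) = x -> hcomp (id2 (idA x)) a = a.
Proof. by move<-; apply: hcomp_idl. Qed.
Lemma hcomp_idr' a x : src (dom2 a) = x -> hcomp a (id2 (idA x)) = a.
Proof. by move<-; apply: hcomp_idr. Qed.
Lemma vcomp_assocr c b a : cod2 a = dom2 b -> cod2 b = dom2 c ->
  vcomp (vcomp c b) a = vcomp c (vcomp b a).
Proof. by move=> *; rewrite vcomp_assoc. Qed.
Lemma hcomp_assocr c b a : tgt (dom2 a) = src (dom2 b) ->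
    tgt (dom2 b) = src (dom2 c) -> hcomp (hcomp c b) a = hcomp c (hcomp b a).
Proof. by move=> *; rewrite hcomp_assoc. Qed.
End Basic.

Ltac ty_step := first
  [ rewrite dom_id2 | rewrite cod_id2 | rewrite src_idA | rewrite tgt_idA
  | rewrite src_cod2 | rewrite tgt_cod2
  | match goal with
    | H : dom2 ?a = _ |- context [dom2 ?a] => rewrite H
    | H : cod2 ?a = _ |- context [cod2 ?a] => rewrite H
    | H : src ?a = _ |- context [src ?a] => rewrite H
    | H : tgt ?a = _ |- context [tgt ?a] => rewrite H
    end
  | rewrite dom_vcomp; [| solve [ty]]
  | rewrite cod_vcomp; [| solve [ty]]
  | rewrite dom_hcomp; [| solve [ty]]
  | rewrite cod_hcomp; [| solve [ty]]
  | rewrite src_compA; [| solve [ty]]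
  | rewrite tgt_compA; [| solve [ty]]
  | rewrite compA_idl'; [| solve [ty]]
  | rewrite compA_idr'; [| solve [ty]]
  | rewrite compA_assocr; [| solve [ty] | solve [ty]] ]
with ty := repeat ty_step; reflexivity.

Ltac rw H := rewrite H; [try done | ty ..].
Ltac rwr H := rewrite -H; [idtac | ty ..].

Section Alg.
Variable C : TwoCat.
Implicit Types (a b c : Cl C) (f g h u v e : Ar C) (x y z : Ob C).

Lemma cancel_l a b b' : is_iso2 a -> cod2 b = dom2 a -> cod2 b' = dom2 a ->
  vcomp a b = vcomp a b' -> b = b'.
Proof.
case=> c [h1 h2 h3 h4] e1 e2 E.
rewrite -(vcomp_idl' e1) -(vcomp_idl' e2) -h3.
by rewrite !vcomp_assocr ?E // ?e1 ?e2.
Qed.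

Lemma cancel_r a b b' : is_iso2 a -> dom2 b = cod2 a -> dom2 b' = cod2 a ->
  vcomp b a = vcomp b' a -> b = b'.
Proof.
case=> c [h1 h2 h3 h4] e1 e2 E.
rewrite -(vcomp_idr' e1) -(vcomp_idr' e2) -h4.
by rewrite -!vcomp_assocr ?E // ?e1 ?e2 ?h2.
Qed.

Lemma iso_inv a : is_iso2 a -> exists c, [/\ dom2 c = cod2 a, cod2 c = dom2 a,
   vcomp c a = id2 (dom2 a) & vcomp a c = id2 (cod2 a)].
Proof. by case=> c [h1 h2 h3 h4]; exists c. Qed.

Lemma hcomp_id_vcomp_l f b a : cod2 a = dom2 b -> tgt (dom2 a) = src f ->
  hcomp (id2 f) (vcomp b a) = vcomp (hcomp (id2 f) b) (hcomp (id2 f) a).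
Proof.
move=> h1 h2; rewrite interchange ?dom_id2 ?cod_id2 //.
by rewrite vcomp_idl' ?cod_id2.
Qed.

Lemma hcomp_id_vcomp_r f b a : cod2 a = dom2 b -> tgt f = src (dom2 a) ->
  hcomp (vcomp b a) (id2 f) = vcomp (hcomp b (id2 f)) (hcomp a (id2 f)).
Proof.
move=> h1 h2; rewrite interchange ?dom_id2 ?cod_id2 //.
by rewrite vcomp_idl' ?cod_id2.
Qed.

Lemma whisk_ll g f a : tgt (dom2 a) = src f -> tgt f = src g ->
  hcomp (id2 g) (hcomp (id2 f) a) = hcomp (id2 (compA g f)) a.
Proof.
move=> h1 h2; rewrite hcomp_assoc ?dom_id2 // hcomp_id2 //.
Qed.

Lemma whisk_rr a g f : tgt f = src g -> tgt g = src (dom2 a) ->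
  hcomp (hcomp a (id2 g)) (id2 f) = hcomp a (id2 (compA g f)).
Proof.
move=> h1 h2; rewrite -hcomp_assoc ?dom_id2 // hcomp_id2 //.
Qed.

Lemma whisk_lr g a f : tgt f = src (dom2 a) -> tgt (dom2 a) = src g ->
  hcomp (hcomp (id2 g) a) (id2 f) = hcomp (id2 g) (hcomp a (id2 f)).
Proof. by move=> h1 h2; rewrite hcomp_assoc ?dom_id2. Qed.

Lemma exch b a f f' g g' : dom2 a = f -> cod2 a = f' -> dom2 b = g -> cod2 b = g' ->
  tgt f = src g ->
  vcomp (hcomp b (id2 f')) (hcomp (id2 g) a) = vcomp (hcomp (id2 g') a) (hcomp b (id2 f)).
Proof.
move=> da ca db cb t.
rewrite !interchange; try ty.
rewrite vcomp_idr' // vcomp_idl' // vcomp_idl' // vcomp_idr' //.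
Qed.

Lemma natR al u v e eps y : dom2 al = u -> cod2 al = v -> src u = y -> src v = y ->
  dom2 eps = e -> cod2 eps = idA y -> tgt e = y -> src e = y ->
  vcomp (hcomp (id2 v) eps) (hcomp al (id2 e)) = vcomp al (hcomp (id2 u) eps).
Proof.
move=> da ca su sv de ce te se.
transitivity (hcomp al eps).
  rewrite interchange; try ty.
  by rewrite vcomp_idl' // vcomp_idr'.
rewrite -[in RHS](@hcomp_idr' _ al y); last by ty.
rewrite interchange; try ty.
by rewrite vcomp_idr' // vcomp_idl'.
Qed.

Lemma natL al u v e eps y : dom2 al = u -> cod2 al = v -> tgt u = y -> tgt v = y ->
  dom2 eps = e -> cod2 eps = idA y -> tgt e = y -> src e = y ->
  vcomp (hcomp eps (id2 v)) (hcomp (id2 e) al) = vcomp al (hcomp eps (id2 u)).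
Proof.
move=> da ca su sv de ce te se.
transitivity (hcomp eps al).
  rewrite interchange; try ty.
  by rewrite vcomp_idl' // vcomp_idr'.
rewrite -[in RHS](@hcomp_idl' _ al y); last by ty.
rewrite interchange; try ty.
by rewrite vcomp_idr' // vcomp_idl'.
Qed.

End Alg.

Definition opC (C : TwoCat) : TwoCat.
refine (@Build_TwoCat (Ob C) (Ar C) (Cl C) (@tgt C) (@src C) (@idA C)
  (fun g f => compA f g) (@dom2 C) (@cod2 C) (@id2 C) (@vcomp C)
  (fun b a => hcomp a b) _ _ _ _ _ _ _ _ _ _ _ _ _ _ _ _ _ _ _ _ _ _ _).
- exact: tgt_idA.
- exact: src_idA.
- by move=> g f h; rewrite tgt_compA.
- by move=> g f h; rewrite src_compA.
- exact: compA_idr.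
- exact: compA_idl.
- by move=> h g f h1 h2; rewrite compA_assoc.
- exact: tgt_cod2.
- exact: src_cod2.
- exact: dom_id2.
- exact: cod_id2.
- exact: dom_vcomp.
- exact: cod_vcomp.
- exact: vcomp_idl.
- exact: vcomp_idr.
- exact: vcomp_assoc.
- by move=> b a h; rewrite dom_hcomp.
- by move=> b a h; rewrite cod_hcomp.
- by move=> g f h; rewrite hcomp_id2.
- exact: hcomp_idr.
- exact: hcomp_idl.
- by move=> c b a h1 h2; rewrite hcomp_assoc.
- by move=> b' b a' a h1 h2 h3; rewrite interchange.
Defined.

Section Whisk.
Variable C : TwoCat.
Hypothesis Hiso : forall a : Cl C, is_iso2 a.
Implicit Types (a b c : Cl C) (f g h u v e : Ar C) (x y z : Ob C).

Lemma rw_faithful f g eps al al' u v x y z :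
  src f = x -> tgt f = y -> src g = y -> tgt g = x ->
  dom2 eps = compA f g -> cod2 eps = idA y ->
  src u = y -> tgt u = z -> src v = y -> tgt v = z ->
  dom2 al = u -> cod2 al = v -> dom2 al' = u -> cod2 al' = v ->
  hcomp al (id2 f) = hcomp al' (id2 f) -> al = al'.
Proof.
move=> sf tf sg tg de ce su tu sv tv da ca da' ca' E.
apply: (@cancel_r _ (hcomp (id2 u) eps)); try ty; first exact: Hiso.
rewrite -(@natR _ al u v (compA f g) eps y); try ty.
rewrite -(@natR _ al' u v (compA f g) eps y); try ty.
rewrite -!(@whisk_rr _ _ f g); try ty.
by rewrite E.
Qed.

Lemma rw_full f g eps eta be u v x y z :
  src f = x -> tgt f = y -> src g = y -> tgt g = x ->
  dom2 eps = compA f g -> cod2 eps = idA y ->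
  dom2 eta = compA g f -> cod2 eta = idA x ->
  src u = y -> tgt u = z -> src v = y -> tgt v = z ->
  dom2 be = compA u f -> cod2 be = compA v f ->
  exists al, [/\ dom2 al = u, cod2 al = v & hcomp al (id2 f) = be].
Proof.
move=> sf tf sg tg de ce dh ch su tu sv tv db cb.
have [su' [ds' cs' e1 e2]] := iso_inv (Hiso (hcomp (id2 u) eps)).
set al := vcomp (hcomp (id2 v) eps) (vcomp (hcomp be (id2 g)) su').
have dal : dom2 al = u by rewrite /al; ty.
have cal : cod2 al = v by rewrite /al; ty.
exists al; split => //.
apply: (@rw_faithful g f eta _ _ (compA u f) (compA v f) y x z); try ty.
rewrite (@whisk_rr _ _ f g); try ty.
apply: (@cancel_l _ (hcomp (id2 v) eps)); try ty; first exact: Hiso.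
rewrite (@natR _ al u v (compA f g) eps y); try ty.
rewrite /al vcomp_assocr; try ty.
rewrite vcomp_assocr; try ty.
rewrite e1.
rewrite vcomp_idr' //; ty.
Qed.

End Whisk.

Section WhiskL.
Variable C : TwoCat.
Hypothesis Hiso : forall a : Cl C, is_iso2 a.
Implicit Types (a b c : Cl C) (f g h u v e : Ar C) (x y z : Ob C).

Lemma lw_faithful f g eps al al' u v x y z :
  tgt f = x -> src f = y -> tgt g = y -> src g = x ->
  dom2 eps = compA g f -> cod2 eps = idA y ->
  tgt u = y -> src u = z -> tgt v = y -> src v = z ->
  dom2 al = u -> cod2 al = v -> dom2 al' = u -> cod2 al' = v ->
  hcomp (id2 f) al = hcomp (id2 f) al' -> al = al'.
Proof. exact: (@rw_faithful (opC C) Hiso f g eps al al' u v x y z). Qed.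

Lemma lw_full f g eps eta be u v x y z :
  tgt f = x -> src f = y -> tgt g = y -> src g = x ->
  dom2 eps = compA g f -> cod2 eps = idA y ->
  dom2 eta = compA f g -> cod2 eta = idA x ->
  tgt u = y -> src u = z -> tgt v = y -> src v = z ->
  dom2 be = compA f u -> cod2 be = compA f v ->
  exists al, [/\ dom2 al = u, cod2 al = v & hcomp (id2 f) al = be].
Proof. exact: (@rw_full (opC C) Hiso f g eps eta be u v x y z). Qed.
End WhiskL.

Definition equivA (C : TwoCat) (f : Ar C) := exists g, [/\ src g = tgt f, tgt g = src f,
     (exists e, [/\ dom2 e = compA f g, cod2 e = idA (tgt f) & is_iso2 e])
   & (exists e, [/\ dom2 e = compA g f, cod2 e = idA (src f) & is_iso2 e])].

Definition coc (C : TwoCat) (fij fkl : Ar C) (ajkl aijl aijk aikl : Cl C) :=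
  vcomp (hcomp ajkl (id2 fij)) aijl = vcomp (hcomp (id2 fkl) aijk) aikl.

Section Tetra.
Variable C : TwoCat.
Hypothesis Hiso : forall a : Cl C, is_iso2 a.
Variables (x0 x1 x2 x3 : Ob C) (f01 f02 f03 f12 f13 f23 : Ar C).
Hypotheses (s01 : src f01 = x0) (t01 : tgt f01 = x1) (s02 : src f02 = x0) (t02 : tgt f02 = x2)
  (s03 : src f03 = x0) (t03 : tgt f03 = x3) (s12 : src f12 = x1) (t12 : tgt f12 = x2)
  (s13 : src f13 = x1) (t13 : tgt f13 = x3) (s23 : src f23 = x2) (t23 : tgt f23 = x3).
Implicit Types (a b c : Cl C).

Lemma solve023 a012 a013 a123 :
  dom2 a012 = f02 -> cod2 a012 = compA f12 f01 ->
  dom2 a013 = f03 -> cod2 a013 = compA f13 f01 ->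
  dom2 a123 = f13 -> cod2 a123 = compA f23 f12 ->
  exists a023, [/\ dom2 a023 = f03, cod2 a023 = compA f23 f02 &
     coc f01 f23 a123 a013 a012 a023].
Proof using All.
move=> d012 c012 d013 c013 d123 c123.
have [w' [dw cw e1 e2]] := iso_inv (Hiso (hcomp (id2 f23) a012)).
exists (vcomp w' (vcomp (hcomp a123 (id2 f01)) a013)); split; try ty.
rewrite /coc -vcomp_assocr; try ty.
rewrite e2 vcomp_idl' //; ty.
Qed.

Lemma uniq023 a012 a013 a123 a023 a023' :
  dom2 a012 = f02 -> cod2 a012 = compA f12 f01 ->
  dom2 a023 = f03 -> cod2 a023 = compA f23 f02 ->
  dom2 a023' = f03 -> cod2 a023' = compA f23 f02 ->
  coc f01 f23 a123 a013 a012 a023 -> coc f01 f23 a123 a013 a012 a023' -> a023 = a023'.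
Proof using All.
move=> d012 c012 d c d' c' E E'.
apply: (@cancel_l _ (hcomp (id2 f23) a012)); try ty; first exact: Hiso.
by rewrite -E -E'.
Qed.

Lemma solve013 a012 a023 a123 :
  dom2 a012 = f02 -> cod2 a012 = compA f12 f01 ->
  dom2 a023 = f03 -> cod2 a023 = compA f23 f02 ->
  dom2 a123 = f13 -> cod2 a123 = compA f23 f12 ->
  exists a013, [/\ dom2 a013 = f03, cod2 a013 = compA f13 f01 &
     coc f01 f23 a123 a013 a012 a023].
Proof using All.
move=> d012 c012 d023 c023 d123 c123.
have [w' [dw cw e1 e2]] := iso_inv (Hiso (hcomp a123 (id2 f01))).
exists (vcomp w' (vcomp (hcomp (id2 f23) a012) a023)); split; try ty.
rewrite /coc -vcomp_assocr; try ty.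
rewrite e2 vcomp_idl' //; ty.
Qed.

Lemma uniq013 a012 a013 a013' a123 a023 :
  dom2 a123 = f13 -> cod2 a123 = compA f23 f12 ->
  dom2 a013 = f03 -> cod2 a013 = compA f13 f01 ->
  dom2 a013' = f03 -> cod2 a013' = compA f13 f01 ->
  coc f01 f23 a123 a013 a012 a023 -> coc f01 f23 a123 a013' a012 a023 -> a013 = a013'.
Proof using All.
move=> d123 c123 d c d' c' E E'.
apply: (@cancel_l _ (hcomp a123 (id2 f01))); try ty; first exact: Hiso.
by rewrite /coc in E E'; rewrite E E'.
Qed.

Lemma solve123 a012 a013 a023 : equivA f01 ->
  dom2 a012 = f02 -> cod2 a012 = compA f12 f01 ->
  dom2 a013 = f03 -> cod2 a013 = compA f13 f01 ->
  dom2 a023 = f03 -> cod2 a023 = compA f23 f02 ->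
  exists a123, [/\ dom2 a123 = f13, cod2 a123 = compA f23 f12 &
     coc f01 f23 a123 a013 a012 a023].
Proof using All.
move=> [g [sg tg [eps [de ce _]] [eta [dh ch _]]]] d012 c012 d013 c013 d023 c023.
rewrite t01 in sg ce; rewrite s01 in tg ch.
have [b' [db cb e1 e2]] := iso_inv (Hiso a013).
have [al [dal cal E]] := @rw_full C Hiso f01 g eps eta
   (vcomp (vcomp (hcomp (id2 f23) a012) a023) b') f13 (compA f23 f12) x0 x1 x3
   ltac:(ty) ltac:(ty) ltac:(ty) ltac:(ty) ltac:(ty) ltac:(ty) ltac:(ty) ltac:(ty)
   ltac:(ty) ltac:(ty) ltac:(ty) ltac:(ty) ltac:(ty) ltac:(ty).
exists al; split => //.
rewrite /coc E vcomp_assocr; try ty.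
rewrite e1 vcomp_idr' //; ty.
Qed.

Lemma uniq123 a012 a013 a023 a123 a123' : equivA f01 ->
  dom2 a013 = f03 -> cod2 a013 = compA f13 f01 ->
  dom2 a123 = f13 -> cod2 a123 = compA f23 f12 ->
  dom2 a123' = f13 -> cod2 a123' = compA f23 f12 ->
  coc f01 f23 a123 a013 a012 a023 -> coc f01 f23 a123' a013 a012 a023 -> a123 = a123'.
Proof using All.
move=> [g [sg tg [eps [de ce _]] [eta [dh ch _]]]] d013 c013 d c d' c' E E'.
rewrite t01 in sg ce; rewrite s01 in tg ch.
apply: (@rw_faithful C Hiso f01 g eps a123 a123' f13 (compA f23 f12) x0 x1 x3); try ty.
apply: (@cancel_r _ a013); try ty; first exact: Hiso.
by rewrite /coc in E E'; rewrite E E'.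
Qed.

Lemma solve012 a013 a023 a123 : equivA f23 ->
  dom2 a013 = f03 -> cod2 a013 = compA f13 f01 ->
  dom2 a023 = f03 -> cod2 a023 = compA f23 f02 ->
  dom2 a123 = f13 -> cod2 a123 = compA f23 f12 ->
  exists a012, [/\ dom2 a012 = f02, cod2 a012 = compA f12 f01 &
     coc f01 f23 a123 a013 a012 a023].
Proof using All.
move=> [g [sg tg [eps [de ce _]] [eta [dh ch _]]]] d013 c013 d023 c023 d123 c123.
rewrite t23 in sg ce; rewrite s23 in tg ch.
have [b' [db cb e1 e2]] := iso_inv (Hiso a023).
have [al [dal cal E]] := @lw_full C Hiso f23 g eta eps
   (vcomp (vcomp (hcomp a123 (id2 f01)) a013) b') f02 (compA f12 f01) x3 x2 x0
   ltac:(ty) ltac:(ty) ltac:(ty) ltac:(ty) ltac:(ty) ltac:(ty) ltac:(ty) ltac:(ty)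
   ltac:(ty) ltac:(ty) ltac:(ty) ltac:(ty) ltac:(ty) ltac:(ty).
exists al; split => //.
rewrite /coc E vcomp_assocr; try ty.
rewrite e1 vcomp_idr' //; ty.
Qed.

Lemma uniq012 a012 a012' a013 a023 a123 : equivA f23 ->
  dom2 a023 = f03 -> cod2 a023 = compA f23 f02 ->
  dom2 a012 = f02 -> cod2 a012 = compA f12 f01 ->
  dom2 a012' = f02 -> cod2 a012' = compA f12 f01 ->
  coc f01 f23 a123 a013 a012 a023 -> coc f01 f23 a123 a013 a012' a023 -> a012 = a012'.
Proof using All.
move=> [g [sg tg [eps [de ce _]] [eta [dh ch _]]]] d023 c023 d c d' c' E E'.
rewrite t23 in sg ce; rewrite s23 in tg ch.
apply: (@lw_faithful C Hiso f23 g eta a012 a012' f02 (compA f12 f01) x3 x2 x0); try ty.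
apply: (@cancel_r _ a023); try ty; first exact: Hiso.
by rewrite /coc in E E'; rewrite -E -E'.
Qed.
End Tetra.

Section Penta.
Variable C : TwoCat.
Hypothesis Hiso : forall a : Cl C, is_iso2 a.
Variables (x0 x1 x2 x3 x4 : Ob C) (f01 f02 f03 f04 f12 f13 f14 f23 f24 f34 : Ar C).
Hypotheses (s01 : src f01 = x0) (t01 : tgt f01 = x1) (s02 : src f02 = x0) (t02 : tgt f02 = x2)
  (s03 : src f03 = x0) (t03 : tgt f03 = x3) (s04 : src f04 = x0) (t04 : tgt f04 = x4)
  (s12 : src f12 = x1) (t12 : tgt f12 = x2) (s13 : src f13 = x1) (t13 : tgt f13 = x3)
  (s14 : src f14 = x1) (t14 : tgt f14 = x4) (s23 : src f23 = x2) (t23 : tgt f23 = x3)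
  (s24 : src f24 = x2) (t24 : tgt f24 = x4) (s34 : src f34 = x3) (t34 : tgt f34 = x4).
Variables (a012 a013 a014 a023 a024 a034 a123 a124 a134 a234 : Cl C).
Hypotheses (d012 : dom2 a012 = f02) (c012 : cod2 a012 = compA f12 f01)
 (d013 : dom2 a013 = f03) (c013 : cod2 a013 = compA f13 f01)
 (d014 : dom2 a014 = f04) (c014 : cod2 a014 = compA f14 f01)
 (d023 : dom2 a023 = f03) (c023 : cod2 a023 = compA f23 f02)
 (d024 : dom2 a024 = f04) (c024 : cod2 a024 = compA f24 f02)
 (d034 : dom2 a034 = f04) (c034 : cod2 a034 = compA f34 f03)
 (d123 : dom2 a123 = f13) (c123 : cod2 a123 = compA f23 f12)
 (d124 : dom2 a124 = f14) (c124 : cod2 a124 = compA f24 f12)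
 (d134 : dom2 a134 = f14) (c134 : cod2 a134 = compA f34 f13)
 (d234 : dom2 a234 = f24) (c234 : cod2 a234 = compA f34 f23).

Let C0124 := coc f01 f24 a124 a014 a012 a024.
Let C0234 := coc f02 f34 a234 a024 a023 a034.
Let C0123 := coc f01 f23 a123 a013 a012 a023.
Let C0134 := coc f01 f34 a134 a014 a013 a034.
Let C1234 := coc f12 f34 a234 a124 a123 a134.

Let Q1 := vcomp (hcomp a234 (id2 (compA f12 f01))) (vcomp (hcomp a124 (id2 f01)) a014).
Let Q2 := vcomp (hcomp a234 (id2 (compA f12 f01))) (vcomp (hcomp (id2 f24) a012) a024).
Let Q3 := vcomp (hcomp (id2 (compA f34 f23)) a012) (vcomp (hcomp a234 (id2 f02)) a024).
Let Q4 := vcomp (hcomp (id2 (compA f34 f23)) a012) (vcomp (hcomp (id2 f34) a023) a034).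
Let Q5 := vcomp (hcomp (id2 f34) (vcomp (hcomp (id2 f23) a012) a023)) a034.
Let Q6 := vcomp (hcomp (id2 f34) (vcomp (hcomp a123 (id2 f01)) a013)) a034.
Let Q7 := vcomp (hcomp (hcomp (id2 f34) a123) (id2 f01)) (vcomp (hcomp (id2 f34) a013) a034).
Let Q8 := vcomp (hcomp (hcomp (id2 f34) a123) (id2 f01)) (vcomp (hcomp a134 (id2 f01)) a014).
Let Q9 := vcomp (hcomp (vcomp (hcomp (id2 f34) a123) a134) (id2 f01)) a014.
Let Q10 := vcomp (hcomp (vcomp (hcomp a234 (id2 f12)) a124) (id2 f01)) a014.

Lemma q23 : Q2 = Q3.
Proof using All.
rewrite /Q2 /Q3 -!vcomp_assocr; try ty.
rewrite (@exch C a234 a012 f02 (compA f12 f01) f24 (compA f34 f23)); try ty.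
Qed.

Lemma q45 : Q4 = Q5.
Proof using All.
rewrite /Q4 /Q5 hcomp_id_vcomp_l; try ty.
rewrite whisk_ll; try ty.
rewrite vcomp_assocr; try ty.
Qed.

Lemma q67 : Q6 = Q7.
Proof using All.
rewrite /Q6 /Q7 hcomp_id_vcomp_l; try ty.
rewrite whisk_lr; try ty.
rewrite vcomp_assocr; try ty.
Qed.

Lemma q89 : Q8 = Q9.
Proof using All.
rewrite /Q8 /Q9 hcomp_id_vcomp_r; try ty.
rewrite vcomp_assocr; try ty.
Qed.

Lemma q101 : Q10 = Q1.
Proof using All.
rewrite /Q10 /Q1 hcomp_id_vcomp_r; try ty.
rewrite whisk_rr; try ty.
rewrite vcomp_assocr; try ty.
Qed.

Lemma l1 : C0124 <-> Q1 = Q2.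
Proof using All.
split; first by rewrite /Q1 /Q2 => ->.
move=> E; apply: (@cancel_l _ (hcomp a234 (id2 (compA f12 f01)))); try ty; first exact: Hiso.
exact: E.
Qed.

Lemma l2 : C0234 <-> Q3 = Q4.
Proof using All.
split; first by rewrite /Q3 /Q4 => ->.
move=> E; apply: (@cancel_l _ (hcomp (id2 (compA f34 f23)) a012)); try ty; first exact: Hiso.
exact: E.
Qed.

Lemma l4 : C0134 <-> Q7 = Q8.
Proof using All.
split; first by rewrite /Q7 /Q8 => ->.
move=> E; symmetry; apply: (@cancel_l _ (hcomp (hcomp (id2 f34) a123) (id2 f01))); try ty.
exact: Hiso.
exact: E.
Qed.

Lemma l3a : C0123 -> Q5 = Q6.
Proof using All. by rewrite /Q5 /Q6 => ->. Qed.

Lemma l3b : equivA f34 -> Q5 = Q6 -> C0123.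
Proof using All.
move=> [g [sg tg [eps [de ce _]] [eta [dh ch _]]]] E.
rewrite t34 in sg ce; rewrite s34 in tg ch.
symmetry.
apply: (@lw_faithful C Hiso f34 g eta _ _ f03 (compA f23 (compA f12 f01)) x4 x3 x0); try ty.
apply: (@cancel_r _ a034); try ty; first exact: Hiso.
exact: E.
Qed.

Lemma l5a : C1234 -> Q9 = Q10.
Proof using All. by rewrite /Q9 /Q10 => ->. Qed.

Lemma l5b : equivA f01 -> Q9 = Q10 -> C1234.
Proof using All.
move=> [g [sg tg [eps [de ce _]] [eta [dh ch _]]]] E.
rewrite t01 in sg ce; rewrite s01 in tg ch.
symmetry.
apply: (@rw_faithful C Hiso f01 g eps _ _ f14 (compA (compA f34 f23) f12) x0 x1 x4); try ty.
apply: (@cancel_r _ a014); try ty; first exact: Hiso.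
exact: E.
Qed.

Lemma pent3 : C0234 -> C0123 -> C0134 -> C1234 -> C0124.
Proof using All.
move=> /l2 h2 /l3a h3 /l4 h4 /l5a h5; apply/l1.
by rewrite -q101 -h5 -q89 -h4 -q67 -h3 -q45 -h2 -q23.
Qed.
Lemma pent1 : C0124 -> C0123 -> C0134 -> C1234 -> C0234.
Proof using All.
move=> /l1 h1 /l3a h3 /l4 h4 /l5a h5; apply/l2.
by rewrite -q23 -h1 -q101 -h5 -q89 -h4 -q67 -h3 -q45.
Qed.
Lemma pent2 : C0124 -> C0234 -> C0123 -> C1234 -> C0134.
Proof using All.
move=> /l1 h1 /l2 h2 /l3a h3 /l5a h5; apply/l4.
by rewrite -q67 -h3 -q45 -h2 -q23 -h1 -q101 -h5 -q89.
Qed.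
Lemma pent4 : equivA f34 -> C0124 -> C0234 -> C0134 -> C1234 -> C0123.
Proof using All.
move=> eq /l1 h1 /l2 h2 /l4 h4 /l5a h5; apply: l3b => //.
by rewrite -q45 -h2 -q23 -h1 -q101 -h5 -q89 -h4 -q67.
Qed.
Lemma pent0 : equivA f01 -> C0124 -> C0234 -> C0123 -> C0134 -> C1234.
Proof using All.
move=> eq /l1 h1 /l2 h2 /l3a h3 /l4 h4; apply: l5b => //.
by rewrite -q89 -h4 -q67 -h3 -q45 -h2 -q23 -h1 -q101.
Qed.
End Penta.


Lemma mono_ext m n (t t' : mono m n) : (forall i, t i = t' i) -> t = t'.
Proof.
case: t => f hf; case: t' => f' hf' /= E.
have ? : f = f' by apply: functional_extensionality.
subst f'; f_equal; apply: proof_irrelevance.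
Qed.

Lemma ord_le_eq n (i j : 'I_n) : i <= j -> ~~ (i < j) -> i = j.
Proof. move=> h1 h2; apply: val_inj => /=; apply/eqP; by rewrite eqn_leq h1 leqNgt h2. Qed.

Section Lax.
Variable C : TwoCat.

Lemma NLax_ext n (P Q : NLax C n) :
  (forall i, nob P i = nob Q i) ->
  (forall i j h, nar P i j h = nar Q i j h) ->
  (forall i j k h1 h2, ncl P i j k h1 h2 = ncl Q i j k h1 h2) -> P = Q.
Proof.
case: P => o a c p1 p2 p3 p4 p5 p6 p7 p8 p9; case: Q => o' a' c' q1 q2 q3 q4 q5 q6 q7 q8 q9 /= E1 E2 E3.
have ? : o = o' by apply: functional_extensionality.
subst o'.
have ? : a = a'.
  apply: functional_extensionality_dep => i; apply: functional_extensionality_dep => j.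
  apply: functional_extensionality_dep => h; exact: E2.
subst a'.
have ? : c = c'.
  do 3! (apply: functional_extensionality_dep => ?).
  do 2! (apply: functional_extensionality_dep => ?).
  exact: E3.
subst c'.
f_equal; apply: proof_irrelevance.
Qed.

Lemma nar_cong n (P : NLax C n) i j i' j' h h' : i = i' -> j = j' -> nar P i j h = nar P i' j' h'.
Proof. by move=> ??; subst; rewrite (bool_irrelevance h h'). Qed.

Lemma ncl_cong n (P : NLax C n) i j k i' j' k' h1 h2 h1' h2' :
  i = i' -> j = j' -> k = k' -> ncl P i j k h1 h2 = ncl P i' j' k' h1' h2'.
Proof.
by move=> ???; subst; rewrite (bool_irrelevance h1 h1') (bool_irrelevance h2 h2').
Qed.

Lemma pull_comp m n p (t : mono m n) (s : mono p m) (P : NLax C n) :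
  pull s (pull t P) = pull (mono_comp t s) P.
Proof. by apply: NLax_ext => //= *; apply: nar_cong. Qed.

End Lax.

Section DataS.
Variable C : TwoCat.

Record Data n := { dob : 'I_n.+1 -> Ob C; dar : 'I_n.+1 -> 'I_n.+1 -> Ar C;
  dcl : 'I_n.+1 -> 'I_n.+1 -> 'I_n.+1 -> Cl C }.

Variable n : nat.
Implicit Types (D : Data n) (i j k l : 'I_n.+1).

Definition narN D i j := if i < j then dar D i j else idA (dob D i).
Definition nclN D i j k := if (i < j) && (j < k) then dcl D i j k else id2 (narN D i k).

Definition G1 D i j := src (dar D i j) = dob D i /\ tgt (dar D i j) = dob D j.
Definition G2 D i j k := dom2 (dcl D i j k) = dar D i k /\
   cod2 (dcl D i j k) = compA (dar D j k) (dar D i j).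
Definition G3 D i j k l :=
  coc (dar D i j) (dar D k l) (dcl D j k l) (dcl D i j l) (dcl D i j k) (dcl D i k l).

Definition goodOn D (P : pred 'I_n.+1) :=
  [/\ forall i j, P i -> P j -> i < j -> G1 D i j,
      forall i j k, P i -> P j -> P k -> i < j -> j < k -> G2 D i j k &
      forall i j k l, P i -> P j -> P k -> P l -> i < j -> j < k -> k < l -> G3 D i j k l].

Section Good.
Variables (D : Data n) (P : pred 'I_n.+1) (H : goodOn D P).

Lemma narN_id i : narN D i i = idA (dob D i).
Proof. by rewrite /narN ltnn. Qed.

Lemma narN_st i j : P i -> P j -> i <= j -> src (narN D i j) = dob D i /\ tgt (narN D i j) = dob D j.
Proof.
move=> Pi Pj; rewrite /narN; case: ifP => h.
  by move=> _; case: H => h1 _ _; apply: h1.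
by move=> hle; have E := ord_le_eq hle (negbT h); subst j; rewrite src_idA tgt_idA.
Qed.

Lemma nclN_idl i j : nclN D i j j = id2 (narN D i j).
Proof. by rewrite /nclN ltnn andbF. Qed.
Lemma nclN_idr i k : nclN D i i k = id2 (narN D i k).
Proof. by rewrite /nclN ltnn. Qed.

Lemma nclN_dc i j k : P i -> P j -> P k -> i <= j -> j <= k ->
  dom2 (nclN D i j k) = narN D i k /\ cod2 (nclN D i j k) = compA (narN D j k) (narN D i j).
Proof.
move=> Pi Pj Pk hij hjk.
have [si ti] := narN_st Pi Pj hij.
have [sj tj] := narN_st Pj Pk hjk.
case: (ltnP i j) => [lij|lji]; last first.
  have E := ord_le_eq hij (negbT (leq_gtF lji)); subst j.
  rewrite nclN_idr narN_id dom_id2 cod_id2; split => //.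
  by rewrite compA_idr' // -si.
case: (ltnP j k) => [ljk|lkj]; last first.
  have E := ord_le_eq hjk (negbT (leq_gtF lkj)); subst k.
  rewrite nclN_idl narN_id dom_id2 cod_id2; split => //.
  by rewrite compA_idl'.
rewrite /nclN lij ljk /= /narN lij ljk (ltn_trans lij ljk).
by case: H => _ h2 _; apply: h2.
Qed.

Lemma nclN_assoc i j k l : P i -> P j -> P k -> P l -> i <= j -> j <= k -> k <= l ->
  vcomp (hcomp (nclN D j k l) (id2 (narN D i j))) (nclN D i j l)
  = vcomp (hcomp (id2 (narN D k l)) (nclN D i j k)) (nclN D i k l).
Proof.
move=> Pi Pj Pk Pl hij hjk hkl.
have hik := leq_trans hij hjk; have hjl := leq_trans hjk hkl; have hil := leq_trans hik hkl.
have [sij tij] := narN_st Pi Pj hij.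
have [sjk tjk] := narN_st Pj Pk hjk.
have [skl tkl] := narN_st Pk Pl hkl.
have [sik tik] := narN_st Pi Pk hik.
have [sjl tjl] := narN_st Pj Pl hjl.
have [sil til] := narN_st Pi Pl hil.
have [d1 c1] := nclN_dc Pj Pk Pl hjk hkl.
have [d2 c2] := nclN_dc Pi Pj Pl hij hjl.
have [d3 c3] := nclN_dc Pi Pj Pk hij hjk.
have [d4 c4] := nclN_dc Pi Pk Pl hik hkl.
case: (ltnP i j) => [lij|lji]; last first.
  have E := ord_le_eq hij (negbT (leq_gtF lji)); subst j.
  rewrite nclN_idr nclN_idr narN_id hcomp_idr'; try ty.
  rewrite vcomp_idr'; try ty.
  rewrite hcomp_id2; try ty.
  rewrite vcomp_idl'; try ty.
case: (ltnP j k) => [ljk|lkj]; last first.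
  have E := ord_le_eq hjk (negbT (leq_gtF lkj)); subst k.
  by rewrite nclN_idr nclN_idl.
case: (ltnP k l) => [lkl|llk]; last first.
  have E := ord_le_eq hkl (negbT (leq_gtF llk)); subst l.
  rewrite nclN_idl nclN_idl hcomp_id2; try ty.
  rewrite vcomp_idl'; try ty.
  rewrite narN_id hcomp_idl'; try ty.
  rewrite vcomp_idr'; try ty.
have G := H; case: G => _ _ h3.
have := h3 i j k l Pi Pj Pk Pl lij ljk lkl; rewrite /G3 /coc.
rewrite /nclN /narN lij ljk lkl (ltn_trans lij ljk) (ltn_trans ljk lkl) /=.
by [].
Qed.
End Good.

Lemma nat_generic (c : Cl C) u v : cod2 c = compA u v -> tgt v = src u ->
  vcomp (hcomp (id2 u) (id2 v)) c = vcomp c (id2 (dom2 c)).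
Proof. move=> h1 h2; rewrite hcomp_id2 // vcomp_idr -h1 vcomp_idl //. Qed.

Definition imP m (t : mono m n) : pred 'I_n.+1 := fun i => [exists a, t a == i].
Lemma imP_in m (t : mono m n) a : imP t (t a).
Proof. by apply/existsP; exists a. Qed.

Definition mkpull m (D : Data n) (t : mono m n) (H : goodOn D (imP t)) : NLax C m.
Proof.
refine (@Build_NLax C m (fun a => dob D (t a)) (fun a b _ => narN D (t a) (t b))
  (fun a b c _ _ => nclN D (t a) (t b) (t c)) _ _ _ _ _ _ _ _ _).
- by move=> a b h; case: (narN_st H (imP_in t a) (imP_in t b) (monoP t h)).
- by move=> a b h; case: (narN_st H (imP_in t a) (imP_in t b) (monoP t h)).
- by move=> a h; apply: narN_id.
- by move=> a b c h1 h2 h3; case: (nclN_dc H (imP_in t a) (imP_in t b) (imP_in t c) (monoP t h1) (monoP t h2)).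
- by move=> a b c h1 h2; case: (nclN_dc H (imP_in t a) (imP_in t b) (imP_in t c) (monoP t h1) (monoP t h2)).
- by move=> a b h1 h2; apply: nclN_idl.
- by move=> a b h1 h2; apply: nclN_idr.
- move=> a b c h1 h2 h3.
  case: (nclN_dc H (imP_in t a) (imP_in t b) (imP_in t c) (monoP t h1) (monoP t h2)) => d e.
  case: (narN_st H (imP_in t a) (imP_in t b) (monoP t h1)) => s1 t1.
  case: (narN_st H (imP_in t b) (imP_in t c) (monoP t h2)) => s2 t2.
  rewrite nat_generic ?d //; ty.
- move=> a b c d h1 h2 h3 h4 h5.
  exact: (nclN_assoc H (imP_in t a) (imP_in t b) (imP_in t c) (imP_in t d) (monoP t h1) (monoP t h2) (monoP t h3)).
Defined.

End DataS.


Definition t0 : 'I_3 := @Ordinal 3 0 isT.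
Definition t1 : 'I_3 := @Ordinal 3 1 isT.
Definition t2 : 'I_3 := @Ordinal 3 2 isT.
Definition q0 : 'I_4 := @Ordinal 4 0 isT.
Definition q1 : 'I_4 := @Ordinal 4 1 isT.
Definition q2 : 'I_4 := @Ordinal 4 2 isT.
Definition q3 : 'I_4 := @Ordinal 4 3 isT.

Definition maxo n (i j : 'I_n) : 'I_n := if i <= j then j else i.
Lemma maxo_l n (i j : 'I_n) : i <= maxo i j.
Proof. by rewrite /maxo; case: ifP. Qed.
Lemma maxo_r n (i j : 'I_n) : j <= maxo i j.
Proof. by rewrite /maxo; case: ifP => // /negbT; rewrite -ltnNge => /ltnW. Qed.
Lemma maxoE n (i j : 'I_n) : i <= j -> maxo i j = j.
Proof. by rewrite /maxo => ->. Qed.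

Section Simplices.
Variable n : nat.
Implicit Types (i j k l : 'I_n.+1).

Definition trif i j k (a : 'I_3) : 'I_n.+1 :=
  match val a with 0 => i | 1 => maxo i j | _ => maxo (maxo i j) k end.
Lemma trif_mono i j k (a b : 'I_3) : a <= b -> trif i j k a <= trif i j k b.
Proof.
case: a => [[|[|[|a]]] ha] //; case: b => [[|[|[|b]]] hb] //= _; rewrite /trif /=;
  by rewrite ?leqnn ?maxo_l ?maxo_r // (leq_trans (maxo_l i j) (maxo_l _ k)).
Qed.
Definition tri i j k : mono 2 n := exist _ (trif i j k) (@trif_mono i j k).

Definition tetf i j k l (a : 'I_4) : 'I_n.+1 :=
  match val a with 0 => i | 1 => maxo i j | 2 => maxo (maxo i j) k
   | _ => maxo (maxo (maxo i j) k) l end.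
Lemma tetf_mono i j k l (a b : 'I_4) : a <= b -> tetf i j k l a <= tetf i j k l b.
Proof.
have h1 := maxo_l i j; have h2 := maxo_l (maxo i j) k; have h3 := maxo_l (maxo (maxo i j) k) l.
case: a => [[|[|[|[|a]]]] ha] //; case: b => [[|[|[|[|b]]]] hb] //= _; rewrite /tetf /=;
  by rewrite ?leqnn //; apply: (leq_trans _ h3) || apply: (leq_trans _ h2) || idtac;
     rewrite ?leqnn // ?(leq_trans h1 h2) //; apply: (leq_trans h1 h2).
Qed.
Definition tet i j k l : mono 3 n := exist _ (tetf i j k l) (@tetf_mono i j k l).

Definition idm : mono n n := exist (fun f : 'I_n.+1 -> 'I_n.+1 => forall i j, i <= j -> f i <= f j) id (fun i j h => h).
Definition cst m : mono m n := exist (fun f : 'I_m.+1 -> 'I_n.+1 => forall a b : 'I_m.+1, a <= b -> f a <= f b) (fun _ => ord0) (fun (a b : 'I_m.+1) h => leqnn _).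

Lemma comp_idm m (t : mono m n) : mono_comp idm t = t.
Proof. exact: mono_ext. Qed.

Lemma inHorn_comp k m p (t : mono m n) (s : mono p m) : inHorn k t -> inHorn k (mono_comp t s).
Proof.
case/existsP => j /andP [hj /forallP ht]; apply/existsP; exists j; rewrite hj /=.
by apply/forallP => a; apply: ht.
Qed.

Lemma inHorn_small k m (t : mono m n) (s : seq 'I_n.+1) :
  size s < n -> (forall a, t a \in s) -> inHorn k t.
Proof.
move=> hs ht.
have : 0 < #|[predC (k :: s)]|.
  have := cardC (mem (k :: s)); rewrite card_ord => E.
  have := card_size (k :: s) => /= hc.
  rewrite -(ltn_add2l #|mem (k :: s)|) addn0 E.
  by apply: (leq_ltn_trans hc).
case/card_gt0P => j; rewrite !inE negb_or => /andP [hjk hjs].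
apply/existsP; exists j; rewrite hjk /=; apply/forallP => a.
by apply: contraNneq hjs => <-.
Qed.

End Simplices.

Lemma comp_tri n m (t : mono m n) (a b c : 'I_m.+1) : a <= b -> b <= c ->
  mono_comp t (tri a b c) = tri (t a) (t b) (t c).
Proof.
move=> hab hbc; apply: mono_ext => -[[|[|[|e]]] he] //=; rewrite /trif /=.
- by rewrite !maxoE // monoP.
- by rewrite !maxoE // ?monoP // (leq_trans hab).
Qed.

Lemma comp_tet n m (t : mono m n) (a b c d : 'I_m.+1) : a <= b -> b <= c -> c <= d ->
  mono_comp t (tet a b c d) = tet (t a) (t b) (t c) (t d).
Proof.
move=> hab hbc hcd; apply: mono_ext => -[[|[|[|[|e]]]] he] //=; rewrite /tetf /=.
- by rewrite !maxoE // monoP.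
- by rewrite !maxoE // ?monoP // (leq_trans hab).
- by rewrite !maxoE // ?monoP // ?(leq_trans hab) // (leq_trans hbc).
Qed.


Lemma tri_vals n (i j l : 'I_n.+1) : i <= j -> j <= l ->
  [/\ tri i j l t0 = i, tri i j l t1 = j & tri i j l t2 = l].
Proof. by move=> h1 h2; rewrite /= /trif /= !maxoE. Qed.

Lemma tet_vals n (i j l m : 'I_n.+1) : i <= j -> j <= l -> l <= m ->
  [/\ tet i j l m q0 = i, tet i j l m q1 = j, tet i j l m q2 = l & tet i j l m q3 = m].
Proof. by move=> h1 h2 h3; rewrite /= /tetf /= !maxoE. Qed.

Section Agree.
Variables (C : TwoCat) (n : nat).
Implicit Types (D : Data C n) (P Q : pred 'I_n.+1) (i j l : 'I_n.+1).

Definition agreeOn D D' P :=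
  [/\ forall i, P i -> dob D i = dob D' i,
      forall i j, P i -> P j -> i < j -> dar D i j = dar D' i j &
      forall i j l, P i -> P j -> P l -> i < j -> j < l -> dcl D i j l = dcl D' i j l].

Lemma agree_sub D D' P Q : (forall i, P i -> Q i) -> agreeOn D D' Q -> agreeOn D D' P.
Proof. move=> PQ [h1 h2 h3]; split=> *; [apply: h1|apply: h2|apply: h3]; by auto. Qed.

Lemma good_sub D P Q : (forall i, P i -> Q i) -> goodOn D Q -> goodOn D P.
Proof. move=> PQ [h1 h2 h3]; split=> *; [apply: h1|apply: h2|apply: h3]; by auto. Qed.

Lemma agree_narN D D' P i j : agreeOn D D' P -> P i -> P j -> narN D i j = narN D' i j.
Proof.
case=> h1 h2 _ Pi Pj; rewrite /narN; case: ifP => lt; first exact: h2.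
by rewrite h1.
Qed.

Lemma agree_nclN D D' P i j l : agreeOn D D' P -> P i -> P j -> P l ->
  nclN D i j l = nclN D' i j l.
Proof.
move=> A Pi Pj Pl; rewrite /nclN; case: ifP => [/andP [l1 l2]|_].
  by case: A => _ _ h3; apply: h3.
by rewrite (agree_narN A Pi Pl).
Qed.

Lemma horn_face k m (t : mono m n) : inHorn k t -> exists j, j != k /\ forall a, t a != j.
Proof.
by case/existsP => j /andP [hj /forallP ht]; exists j.
Qed.

Lemma horn_imP k m (t : mono m n) : inHorn k t -> exists j, j != k /\ forall i, imP t i -> i != j.
Proof.
case/horn_face => j [hj ht]; exists j; split => // i /existsP [a /eqP <-]; exact: ht.
Qed.

Lemma strict_det (P Q : NLax C n) : (forall i, nob P i = nob Q i) ->
  (forall i j h, i < j -> nar P i j h = nar Q i j h) ->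
  (forall i j l h1 h2, i < j -> j < l -> ncl P i j l h1 h2 = ncl Q i j l h1 h2) -> P = Q.
Proof.
move=> E1 E2 E3.
have E2' : forall i j h, nar P i j h = nar Q i j h.
  move=> i j h; case: (boolP (i < j)) => lt; first exact: E2.
  have E := ord_le_eq h (lt); subst j; by rewrite !nar_id E1.
apply: NLax_ext => // i j l h1 h2.
case: (boolP (i < j)) => l1; last first.
  have E := ord_le_eq h1 l1; subst j; by rewrite !ncl_idr E2'.
case: (boolP (j < l)) => l2; last first.
  have E := ord_le_eq h2 l2; subst l; by rewrite !ncl_idl E2'.
exact: E3.
Qed.

Lemma sm_pull (z : forall m, mono m n -> NLax C m) :
  @simplex_map (nerve C) n z -> forall m t, z m t = pull t (z n (idm n)).
Proof. by move=> Hz m t; rewrite -{1}(comp_idm t) -Hz. Qed.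

Lemma sm_unique (z z' : forall m, mono m n -> NLax C m) :
  @simplex_map (nerve C) n z -> @simplex_map (nerve C) n z' ->
  z n (idm n) = z' n (idm n) -> forall m t, z m t = z' m t.
Proof. by move=> Hz Hz' E m t; rewrite (sm_pull Hz) (sm_pull Hz') E. Qed.

Lemma mk_simplex D (HD : goodOn D predT) :
  @simplex_map (nerve C) n (fun m t => @mkpull C n m D t (good_sub (fun i _ => isT) HD)).
Proof. by move=> m p t s; apply: NLax_ext. Qed.

End Agree.

Section Horn.
Variables (C : TwoCat) (n : nat) (k : 'I_n.+1).
Variable x : forall m, mono m n -> NLax C m.
Arguments x : clear implicits.
Hypothesis Hx : @horn_map (nerve C) n k x.
Implicit Types (i j l : 'I_n.+1).

Lemma hx_pull m p (t : mono m n) (s : mono p m) : inHorn k t -> x p (mono_comp t s) = pull s (x m t).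
Proof. by move=> h; rewrite -(@Hx m p t s h). Qed.

Definition Dx : Data C n := {| dob := fun i => nob (x 2 (tri i i i)) t0;
  dar := fun i j => nar (x 2 (tri i j j)) t0 t1 isT;
  dcl := fun i j l => ncl (x 2 (tri i j l)) t0 t1 t2 isT isT |}.

Lemma hx_ob m (t : mono m n) a : inHorn k t -> nob (x m t) a = dob Dx (t a).
Proof. by move=> h; rewrite /= -(comp_tri t (leqnn a) (leqnn a)) hx_pull. Qed.

Lemma hx_ar m (t : mono m n) a b h : inHorn k t -> nar (x m t) a b h = dar Dx (t a) (t b).
Proof.
move=> hh; rewrite /= -(comp_tri t h (leqnn b)) hx_pull //=.
by apply: nar_cong => //=; rewrite /trif /= maxoE.
Qed.

Lemma hx_cl m (t : mono m n) a b c h1 h2 : inHorn k t ->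
  ncl (x m t) a b c h1 h2 = dcl Dx (t a) (t b) (t c).
Proof.
move=> hh; rewrite /= -(comp_tri t h1 h2) hx_pull //=.
by apply: ncl_cong => //=; rewrite /trif /= !maxoE.
Qed.

Lemma hx_narN m (t : mono m n) a b h : inHorn k t -> nar (x m t) a b h = narN Dx (t a) (t b).
Proof.
move=> hh; rewrite /narN; case: ifP => lt; first exact: hx_ar.
have E := ord_le_eq (monoP t h) (negbT lt).
rewrite (hx_ar _ hh) -E -(hx_ar (leqnn a) hh) nar_id.
by rewrite (hx_ob _ hh).
Qed.

Lemma hx_nclN m (t : mono m n) a b c h1 h2 : inHorn k t ->
  ncl (x m t) a b c h1 h2 = nclN Dx (t a) (t b) (t c).
Proof.
move=> hh; rewrite /nclN; case: ifP => [/andP [l1 l2]|nl]; first exact: hx_cl.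
case: (boolP (t a < t b)) => l1.
  have E : t b = t c.
    apply: (ord_le_eq (monoP t h2)); by rewrite l1 /= in nl; rewrite nl.
  rewrite (hx_cl _ _ hh) -E -(hx_cl h1 (leqnn b) hh) ncl_idl.
  by rewrite (hx_narN _ hh).
have E := ord_le_eq (monoP t h1) l1.
rewrite (hx_cl _ _ hh) -E -(hx_cl (leqnn a) (leq_trans h1 h2) hh) ncl_idr.
by rewrite (hx_narN _ hh).
Qed.

Lemma gx1 i j : i < j -> inHorn k (tri i j j) -> G1 Dx i j.
Proof.
move=> lt h; have [v0 v1 v2] := tri_vals (ltnW lt) (leqnn j).
split.
  by rewrite /= nar_src (hx_ob _ h) v0.
by rewrite /= nar_tgt (hx_ob _ h) v1.
Qed.

Lemma gx2 i j l : i < j -> j < l -> inHorn k (tri i j l) -> G2 Dx i j l.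
Proof.
move=> l1 l2 h; have [v0 v1 v2] := tri_vals (ltnW l1) (ltnW l2).
rewrite /G2 /= (ncl_dom _ _ _ _ _ _ _ _ (isT : t0 <= t2)) ncl_cod.
rewrite !(hx_narN _ h) v0 v1 v2 /narN l1 l2 (ltn_trans l1 l2).
by [].
Qed.

Lemma gx3 i j l (o : 'I_n.+1) : i < j -> j < l -> l < o -> inHorn k (tet i j l o) -> G3 Dx i j l o.
Proof.
move=> l1 l2 l3 h; have [v0 v1 v2 v3] := tet_vals (ltnW l1) (ltnW l2) (ltnW l3).
have A := @ncl_assoc C 3 (x 3 (tet i j l o)) q0 q1 q2 q3 isT isT isT isT isT.
rewrite !(hx_nclN _ _ h) !(hx_narN _ h) v0 v1 v2 v3 in A.
move: A; rewrite /nclN /narN l1 l2 l3 (ltn_trans l1 l2) (ltn_trans l2 l3) /=.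
by [].
Qed.

Lemma fill_from (D : Data C n) (HD : goodOn D predT)
  (Ha : forall j, j != k -> agreeOn D Dx (predC1 j)) :
  exists z, @simplex_map (nerve C) n z /\ @extends (nerve C) n k z x.
Proof.
exists (fun m t => @mkpull C n m D t (good_sub (fun i _ => isT) HD)); split; first exact: mk_simplex.
move=> m t ht.
have [j [hj hi]] := horn_imP ht.
have A : agreeOn D Dx (imP t) by apply: (agree_sub hi); apply: Ha.
apply: NLax_ext => /=.
- by move=> a; rewrite (hx_ob _ ht); case: A => a1 _ _; apply: a1; apply: imP_in.
- by move=> a b h; rewrite (hx_narN _ ht); apply: (agree_narN A); apply: imP_in.
- by move=> a b c h1 h2; rewrite (hx_nclN _ _ ht); apply: (agree_nclN A); apply: imP_in.
Qed.

Section Filler.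
Variable z : forall m, mono m n -> NLax C m.
Arguments z : clear implicits.
Hypotheses (Hz : @simplex_map (nerve C) n z) (He : @extends (nerve C) n k z x).

Lemma fz_ob i : inHorn k (tri i i i) -> nob (z n (idm n)) i = dob Dx i.
Proof. by move=> h; rewrite /= -(@He 2 _ h) (@sm_pull C n z Hz 2). Qed.
Lemma fz_ar i j h : inHorn k (tri i j j) -> nar (z n (idm n)) i j h = dar Dx i j.
Proof.
move=> hh; rewrite /= -(@He 2 _ hh) (@sm_pull C n z Hz 2) /=.
by apply: nar_cong => //=; rewrite /trif /= maxoE.
Qed.
Lemma fz_cl i j l h1 h2 : inHorn k (tri i j l) -> ncl (z n (idm n)) i j l h1 h2 = dcl Dx i j l.
Proof.
move=> hh; rewrite /= -(@He 2 _ hh) (@sm_pull C n z Hz 2) /=.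
by apply: ncl_cong => //=; rewrite /trif /= !maxoE.
Qed.
End Filler.
End Horn.

Section HornX.
Variables (C : TwoCat) (n : nat) (k : 'I_n.+1) (D : Data C n).
Hypothesis HD : forall j, j != k -> goodOn D (predC1 j).
Implicit Types (i j l : 'I_n.+1).

Lemma HDt m (t : mono m n) : inHorn k t -> goodOn D (imP t).
Proof. by case/horn_imP => j [hj hi]; apply: (good_sub hi); apply: HD. Qed.

Lemma good_cst m : goodOn D (imP (cst n m)).
Proof.
have E : forall i, imP (cst n m) i -> i = ord0 by move=> i /existsP [a /eqP <-].
split.
- by move=> i j Pi Pj; rewrite (E i Pi) (E j Pj) ltnn.
- by move=> i j l Pi Pj Pl; rewrite (E i Pi) (E j Pj) ltnn.
- by move=> i j l o Pi Pj Pl Po; rewrite (E i Pi) (E j Pj) ltnn.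
Qed.

Definition hornx_aux m (t : mono m n) (b : bool) (e : inHorn k t = b) : NLax C m :=
  (match b as b' return inHorn k t = b' -> NLax C m with
   | true => fun h => mkpull (HDt h)
   | false => fun _ => mkpull (good_cst m) end) e.
Definition hornx m (t : mono m n) : NLax C m := hornx_aux (erefl (inHorn k t)).

Lemma hornx_in m (t : mono m n) (h : inHorn k t) : hornx t = mkpull (HDt h).
Proof.
rewrite /hornx.
have : forall b (e : inHorn k t = b), hornx_aux e = mkpull (HDt h).
  case=> e /=; first by congr mkpull; apply: proof_irrelevance.
  by rewrite h in e.
by apply.
Qed.

Lemma hornx_map : @horn_map (nerve C) n k hornx.
Proof.
move=> m p t s h; rewrite /= (hornx_in h) (hornx_in (inHorn_comp s h)).
by apply: NLax_ext.
Qed.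

Lemma mk_extends (D' : Data C n) (HD' : goodOn D' predT)
  (Ha : forall j, j != k -> agreeOn D' D (predC1 j)) :
  @extends (nerve C) n k (fun m t => @mkpull C n m D' t (good_sub (fun i _ => isT) HD')) hornx.
Proof.
move=> m t ht; rewrite (hornx_in ht).
have [j [hj hi]] := horn_imP ht.
have A : agreeOn D' D (imP t) by apply: (agree_sub hi); apply: Ha.
apply: NLax_ext => /=.
- by move=> a; case: A => a1 _ _; apply: a1; apply: imP_in.
- by move=> a b h; apply: (agree_narN A); apply: imP_in.
- by move=> a b c h1 h2; apply: (agree_nclN A); apply: imP_in.
Qed.

Section HFill.
Variable z : forall m, mono m n -> NLax C m.
Arguments z : clear implicits.
Hypotheses (Hz : @simplex_map (nerve C) n z) (He : @extends (nerve C) n k z hornx).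

Lemma hz_ob i : inHorn k (tri i i i) -> nob (z n (idm n)) i = dob D i.
Proof. by move=> h; rewrite (fz_ob Hz He h) /= (hornx_in h). Qed.

Lemma hz_ar i j h : i < j -> inHorn k (tri i j j) -> nar (z n (idm n)) i j h = dar D i j.
Proof.
move=> lt hh; rewrite (fz_ar Hz He h hh) /= (hornx_in hh) /=.
by rewrite /trif /= maxoE // /narN lt.
Qed.

Lemma hz_cl i j l h1 h2 : i < j -> j < l -> inHorn k (tri i j l) ->
  ncl (z n (idm n)) i j l h1 h2 = dcl D i j l.
Proof.
move=> l1 l2 hh; rewrite (fz_cl Hz He h1 h2 hh) /= (hornx_in hh) /=.
by rewrite /trif /= !maxoE // /nclN l1 l2.
Qed.
End HFill.
End HornX.


Definition p0 : 'I_5 := @Ordinal 5 0 isT.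
Definition p1 : 'I_5 := @Ordinal 5 1 isT.
Definition p2 : 'I_5 := @Ordinal 5 2 isT.
Definition p3 : 'I_5 := @Ordinal 5 3 isT.
Definition p4 : 'I_5 := @Ordinal 5 4 isT.
Definition r0 : 'I_2 := @Ordinal 2 0 isT.
Definition r1 : 'I_2 := @Ordinal 2 1 isT.

Ltac fixord := repeat match goal with
  | h : is_true (?a < ?b) |- context [@Ordinal ?b ?a ?h] => rewrite (bool_irrelevance h isT)
  end.

Lemma enum2 (P : 'I_3 -> 'I_3 -> Prop) : P t0 t1 -> P t0 t2 -> P t1 t2 ->
  forall i j : 'I_3, i < j -> P i j.
Proof.
move=> H1 H2 H3 [[|[|[|i]]] hi] [[|[|[|j]]] hj] //= _; by fixord.
Qed.

Lemma enum3_4 (P : 'I_4 -> 'I_4 -> 'I_4 -> Prop) : P q0 q1 q2 -> P q0 q1 q3 -> P q0 q2 q3 -> P q1 q2 q3 ->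
  forall i j l : 'I_4, i < j -> j < l -> P i j l.
Proof.
move=> H1 H2 H3 H4 [[|[|[|[|i]]]] hi] [[|[|[|[|j]]]] hj] [[|[|[|[|l]]]] hl] //= _ _; by fixord.
Qed.

Lemma enum4_5 (P : 'I_5 -> 'I_5 -> 'I_5 -> 'I_5 -> Prop) :
  P p0 p1 p2 p3 -> P p0 p1 p2 p4 -> P p0 p1 p3 p4 -> P p0 p2 p3 p4 -> P p1 p2 p3 p4 ->
  forall i j l o : 'I_5, i < j -> j < l -> l < o -> P i j l o.
Proof.
move=> H1 H2 H3 H4 H5 [[|[|[|[|[|i]]]]] hi] [[|[|[|[|[|j]]]]] hj] [[|[|[|[|[|l]]]]] hl]
  [[|[|[|[|[|o]]]]] ho] //= _ _ _; by fixord.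
Qed.

Lemma no4_3 (i j l o : 'I_3) : i < j -> j < l -> l < o -> False.
Proof. move=> h1 h2 h3; have := ltn_ord o; lia. Qed.

Lemma enum4_4 (P : 'I_4 -> 'I_4 -> 'I_4 -> 'I_4 -> Prop) : P q0 q1 q2 q3 ->
  forall i j l o : 'I_4, i < j -> j < l -> l < o -> P i j l o.
Proof.
move=> H1 [[|[|[|[|i]]]] hi] [[|[|[|[|j]]]] hj] [[|[|[|[|l]]]] hl]
  [[|[|[|[|o]]]] ho] //= _ _ _; by fixord.
Qed.

Lemma enum3_5 (P : 'I_5 -> 'I_5 -> 'I_5 -> Prop) :
  (forall i j l : 'I_5, i < j -> j < l -> P i j l) -> forall i j l : 'I_5, i < j -> j < l -> P i j l.
Proof. by []. Qed.

Section N3.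
Variable C : TwoCat.
Hypothesis Hiso : forall a : Cl C, is_iso2 a.

Lemma solve3 (k : 'I_4) (Hk : (0 < k < 3) \/ (forall f : Ar C, equivA f)) (D : Data C 3)
  (H1 : forall i j : 'I_4, i < j -> G1 D i j)
  (H2 : forall i j l : 'I_4, i < j -> j < l -> k \in [:: i; j; l] -> G2 D i j l) :
  exists D' : Data C 3, goodOn D' predT /\
    [/\ forall i, dob D' i = dob D i, forall i j, dar D' i j = dar D i j &
     forall i j l, k \in [:: i; j; l] -> dcl D' i j l = dcl D i j l].
Proof.
have [s01 t01] := H1 q0 q1 isT.
have [s02 t02] := H1 q0 q2 isT.
have [s03 t03] := H1 q0 q3 isT.
have [s12 t12] := H1 q1 q2 isT.
have [s13 t13] := H1 q1 q3 isT.
have [s23 t23] := H1 q2 q3 isT.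
case: k Hk H2 => [[|[|[|[|k]]]] hk] Hk H2 //.
-
  have Heq : forall f : Ar C, equivA f by case: Hk.
  have [d012 c012] := H2 q0 q1 q2 isT isT isT.
  have [d013 c013] := H2 q0 q1 q3 isT isT isT.
  have [d023 c023] := H2 q0 q2 q3 isT isT isT.
  have [a [da ca E]] := solve123 Hiso s01 t01 s02 t02 s03 t03 s12 t12 s13 t13 s23 t23 (Heq (dar D q0 q1)) d012 c012 d013 c013 d023 c023.
  exists {| dob := dob D; dar := dar D; dcl := fun i j l => if [&& i == q1, j == q2 & l == q3] then a else dcl D i j l |}.
  split; last first.
    split; [by [] | by [] | move=> i j l /=; case: ifP => [/and3P [/eqP -> /eqP -> /eqP ->]|//]].
    by [].
  split.
  + by move=> i j _ _ lt; apply: H1.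
  + move=> i j l _ _ _; apply: (enum3_4 (P := fun i j l => G2 _ i j l)); rewrite /G2 /=.
    * by split.
    * by split.
    * by split.
    * by split.
  + move=> i j l o _ _ _ _; apply: (enum4_4 (P := fun i j l o => G3 _ i j l o)); rewrite /G3 /=.
    exact: E.
-
  have [d012 c012] := H2 q0 q1 q2 isT isT isT.
  have [d013 c013] := H2 q0 q1 q3 isT isT isT.
  have [d123 c123] := H2 q1 q2 q3 isT isT isT.
  have [a [da ca E]] := solve023 Hiso s01 t01 s02 t02 s03 t03 s12 t12 s13 t13 s23 t23  d012 c012 d013 c013 d123 c123.
  exists {| dob := dob D; dar := dar D; dcl := fun i j l => if [&& i == q0, j == q2 & l == q3] then a else dcl D i j l |}.
  split; last first.
    split; [by [] | by [] | move=> i j l /=; case: ifP => [/and3P [/eqP -> /eqP -> /eqP ->]|//]].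
    by [].
  split.
  + by move=> i j _ _ lt; apply: H1.
  + move=> i j l _ _ _; apply: (enum3_4 (P := fun i j l => G2 _ i j l)); rewrite /G2 /=.
    * by split.
    * by split.
    * by split.
    * by split.
  + move=> i j l o _ _ _ _; apply: (enum4_4 (P := fun i j l o => G3 _ i j l o)); rewrite /G3 /=.
    exact: E.
-
  have [d012 c012] := H2 q0 q1 q2 isT isT isT.
  have [d023 c023] := H2 q0 q2 q3 isT isT isT.
  have [d123 c123] := H2 q1 q2 q3 isT isT isT.
  have [a [da ca E]] := solve013 Hiso s01 t01 s02 t02 s03 t03 s12 t12 s13 t13 s23 t23  d012 c012 d023 c023 d123 c123.
  exists {| dob := dob D; dar := dar D; dcl := fun i j l => if [&& i == q0, j == q1 & l == q3] then a else dcl D i j l |}.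
  split; last first.
    split; [by [] | by [] | move=> i j l /=; case: ifP => [/and3P [/eqP -> /eqP -> /eqP ->]|//]].
    by [].
  split.
  + by move=> i j _ _ lt; apply: H1.
  + move=> i j l _ _ _; apply: (enum3_4 (P := fun i j l => G2 _ i j l)); rewrite /G2 /=.
    * by split.
    * by split.
    * by split.
    * by split.
  + move=> i j l o _ _ _ _; apply: (enum4_4 (P := fun i j l o => G3 _ i j l o)); rewrite /G3 /=.
    exact: E.
-
  have Heq : forall f : Ar C, equivA f by case: Hk.
  have [d013 c013] := H2 q0 q1 q3 isT isT isT.
  have [d023 c023] := H2 q0 q2 q3 isT isT isT.
  have [d123 c123] := H2 q1 q2 q3 isT isT isT.
  have [a [da ca E]] := solve012 Hiso s01 t01 s02 t02 s03 t03 s12 t12 s13 t13 s23 t23 (Heq (dar D q2 q3)) d013 c013 d023 c023 d123 c123.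
  exists {| dob := dob D; dar := dar D; dcl := fun i j l => if [&& i == q0, j == q1 & l == q2] then a else dcl D i j l |}.
  split; last first.
    split; [by [] | by [] | move=> i j l /=; case: ifP => [/and3P [/eqP -> /eqP -> /eqP ->]|//]].
    by [].
  split.
  + by move=> i j _ _ lt; apply: H1.
  + move=> i j l _ _ _; apply: (enum3_4 (P := fun i j l => G2 _ i j l)); rewrite /G2 /=.
    * by split.
    * by split.
    * by split.
    * by split.
  + move=> i j l o _ _ _ _; apply: (enum4_4 (P := fun i j l o => G3 _ i j l o)); rewrite /G3 /=.
    exact: E.
Qed.

Lemma uniq3 (k : 'I_4) (Hk : (0 < k < 3) \/ (forall f : Ar C, equivA f)) (D D' : Data C 3)
  (gD : goodOn D predT) (gD' : goodOn D' predT)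
  (Eo : forall i, dob D i = dob D' i) (Ea : forall i j : 'I_4, i < j -> dar D i j = dar D' i j)
  (Ec : forall i j l : 'I_4, i < j -> j < l -> k \in [:: i; j; l] -> dcl D i j l = dcl D' i j l) :
  forall i j l : 'I_4, i < j -> j < l -> dcl D i j l = dcl D' i j l.
Proof.
case: gD => G1a G2a G3a; case: gD' => G1b G2b G3b.
have [s01 t01] := G1a q0 q1 isT isT isT.
have [s02 t02] := G1a q0 q2 isT isT isT.
have [s03 t03] := G1a q0 q3 isT isT isT.
have [s12 t12] := G1a q1 q2 isT isT isT.
have [s13 t13] := G1a q1 q3 isT isT isT.
have [s23 t23] := G1a q2 q3 isT isT isT.
have E := G3a q0 q1 q2 q3 isT isT isT isT isT isT isT.
have E' := G3b q0 q1 q2 q3 isT isT isT isT isT isT isT.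
rewrite /G3 -(Ea q0 q1 isT) -(Ea q2 q3 isT) in E'.
case: k Hk Ec => [[|[|[|[|k]]]] hk] Hk Ec //.
-
  have Heq : forall f : Ar C, equivA f by case: Hk.
  rewrite -(Ec q0 q1 q2 isT isT isT) in E'.
  rewrite -(Ec q0 q1 q3 isT isT isT) in E'.
  rewrite -(Ec q0 q2 q3 isT isT isT) in E'.
  have [du cu] := G2a q0 q1 q3 isT isT isT isT isT.
  have [d c] := G2a q1 q2 q3 isT isT isT isT isT.
  have [d' c'] := G2b q1 q2 q3 isT isT isT isT isT.
  rewrite -!Ea // in d' c'.
  apply: (enum3_4 (P := fun i j l => dcl D i j l = dcl D' i j l)); try (by apply: Ec).
  exact: (uniq123 Hiso s01 t01 s02 t02 s03 t03 s12 t12 s13 t13 s23 t23 (Heq (dar D q0 q1)) du cu d c d' c' E E').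
-
  rewrite -(Ec q0 q1 q2 isT isT isT) in E'.
  rewrite -(Ec q0 q1 q3 isT isT isT) in E'.
  rewrite -(Ec q1 q2 q3 isT isT isT) in E'.
  have [du cu] := G2a q0 q1 q2 isT isT isT isT isT.
  have [d c] := G2a q0 q2 q3 isT isT isT isT isT.
  have [d' c'] := G2b q0 q2 q3 isT isT isT isT isT.
  rewrite -!Ea // in d' c'.
  apply: (enum3_4 (P := fun i j l => dcl D i j l = dcl D' i j l)); try (by apply: Ec).
  exact: (uniq023 Hiso s01 t01 s02 t02 s03 t03 s12 t12 s13 t13 s23 t23  du cu d c d' c' E E').
-
  rewrite -(Ec q0 q1 q2 isT isT isT) in E'.
  rewrite -(Ec q0 q2 q3 isT isT isT) in E'.
  rewrite -(Ec q1 q2 q3 isT isT isT) in E'.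
  have [du cu] := G2a q1 q2 q3 isT isT isT isT isT.
  have [d c] := G2a q0 q1 q3 isT isT isT isT isT.
  have [d' c'] := G2b q0 q1 q3 isT isT isT isT isT.
  rewrite -!Ea // in d' c'.
  apply: (enum3_4 (P := fun i j l => dcl D i j l = dcl D' i j l)); try (by apply: Ec).
  exact: (uniq013 Hiso s01 t01 s02 t02 s03 t03 s12 t12 s13 t13 s23 t23  du cu d c d' c' E E').
-
  have Heq : forall f : Ar C, equivA f by case: Hk.
  rewrite -(Ec q0 q1 q3 isT isT isT) in E'.
  rewrite -(Ec q0 q2 q3 isT isT isT) in E'.
  rewrite -(Ec q1 q2 q3 isT isT isT) in E'.
  have [du cu] := G2a q0 q2 q3 isT isT isT isT isT.
  have [d c] := G2a q0 q1 q2 isT isT isT isT isT.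
  have [d' c'] := G2b q0 q1 q2 isT isT isT isT isT.
  rewrite -!Ea // in d' c'.
  apply: (enum3_4 (P := fun i j l => dcl D i j l = dcl D' i j l)); try (by apply: Ec).
  exact: (uniq012 Hiso s01 t01 s02 t02 s03 t03 s12 t12 s13 t13 s23 t23 (Heq (dar D q2 q3)) du cu d c d' c' E E').
Qed.
End N3.

Section N4.
Variable C : TwoCat.
Hypothesis Hiso : forall a : Cl C, is_iso2 a.

Lemma penta4 (k : 'I_5) (Hk : (0 < k < 4) \/ (forall f : Ar C, equivA f)) (D : Data C 4)
  (H1 : forall i j : 'I_5, i < j -> G1 D i j)
  (H2 : forall i j l : 'I_5, i < j -> j < l -> G2 D i j l)
  (H3 : forall i j l o : 'I_5, i < j -> j < l -> l < o -> k \in [:: i; j; l; o] -> G3 D i j l o) :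
  goodOn D predT.
Proof.
split; [by move=> *; apply: H1 | by move=> *; apply: H2 | move=> i j l o _ _ _ _].
have [s01 t01] := H1 p0 p1 isT.
have [s02 t02] := H1 p0 p2 isT.
have [s03 t03] := H1 p0 p3 isT.
have [s04 t04] := H1 p0 p4 isT.
have [s12 t12] := H1 p1 p2 isT.
have [s13 t13] := H1 p1 p3 isT.
have [s14 t14] := H1 p1 p4 isT.
have [s23 t23] := H1 p2 p3 isT.
have [s24 t24] := H1 p2 p4 isT.
have [s34 t34] := H1 p3 p4 isT.
have [d012 c012] := H2 p0 p1 p2 isT isT.
have [d013 c013] := H2 p0 p1 p3 isT isT.
have [d014 c014] := H2 p0 p1 p4 isT isT.
have [d023 c023] := H2 p0 p2 p3 isT isT.
have [d024 c024] := H2 p0 p2 p4 isT isT.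
have [d034 c034] := H2 p0 p3 p4 isT isT.
have [d123 c123] := H2 p1 p2 p3 isT isT.
have [d124 c124] := H2 p1 p2 p4 isT isT.
have [d134 c134] := H2 p1 p3 p4 isT isT.
have [d234 c234] := H2 p2 p3 p4 isT isT.
case: k Hk H3 => [[|[|[|[|[|k]]]]] hk] Hk H3 //.
-
  have Heq : forall f : Ar C, equivA f by case: Hk.
  have h0123 := H3 p0 p1 p2 p3 isT isT isT isT.
  have h0124 := H3 p0 p1 p2 p4 isT isT isT isT.
  have h0134 := H3 p0 p1 p3 p4 isT isT isT isT.
  have h0234 := H3 p0 p2 p3 p4 isT isT isT isT.
  apply: (enum4_5 (P := fun i j l o => G3 D i j l o)); try (by []).
  exact: (pent0 Hiso s01 t01 s02 t02 s03 t03 s04 t04 s12 t12 s13 t13 s14 t14 s23 t23 s24 t24 s34 t34 d012 c012 d013 c013 d014 c014 d023 c023 d024 c024 d034 c034 d123 c123 d124 c124 d134 c134 d234 c234 (Heq (dar D p0 p1)) h0124 h0234 h0123 h0134).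
-
  have h0123 := H3 p0 p1 p2 p3 isT isT isT isT.
  have h0124 := H3 p0 p1 p2 p4 isT isT isT isT.
  have h0134 := H3 p0 p1 p3 p4 isT isT isT isT.
  have h1234 := H3 p1 p2 p3 p4 isT isT isT isT.
  apply: (enum4_5 (P := fun i j l o => G3 D i j l o)); try (by []).
  exact: (pent1 Hiso s01 t01 s02 t02 s03 t03 s04 t04 s12 t12 s13 t13 s14 t14 s23 t23 s24 t24 s34 t34 d012 c012 d013 c013 d014 c014 d023 c023 d024 c024 d034 c034 d123 c123 d124 c124 d134 c134 d234 c234  h0124 h0123 h0134 h1234).
-
  have h0123 := H3 p0 p1 p2 p3 isT isT isT isT.
  have h0124 := H3 p0 p1 p2 p4 isT isT isT isT.
  have h0234 := H3 p0 p2 p3 p4 isT isT isT isT.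
  have h1234 := H3 p1 p2 p3 p4 isT isT isT isT.
  apply: (enum4_5 (P := fun i j l o => G3 D i j l o)); try (by []).
  exact: (pent2 Hiso s01 t01 s02 t02 s03 t03 s04 t04 s12 t12 s13 t13 s14 t14 s23 t23 s24 t24 s34 t34 d012 c012 d013 c013 d014 c014 d023 c023 d024 c024 d034 c034 d123 c123 d124 c124 d134 c134 d234 c234  h0124 h0234 h0123 h1234).
-
  have h0123 := H3 p0 p1 p2 p3 isT isT isT isT.
  have h0134 := H3 p0 p1 p3 p4 isT isT isT isT.
  have h0234 := H3 p0 p2 p3 p4 isT isT isT isT.
  have h1234 := H3 p1 p2 p3 p4 isT isT isT isT.
  apply: (enum4_5 (P := fun i j l o => G3 D i j l o)); try (by []).
  exact: (pent3 Hiso s01 t01 s02 t02 s03 t03 s04 t04 s12 t12 s13 t13 s14 t14 s23 t23 s24 t24 s34 t34 d012 c012 d013 c013 d014 c014 d023 c023 d024 c024 d034 c034 d123 c123 d124 c124 d134 c134 d234 c234  h0234 h0123 h0134 h1234).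
-
  have Heq : forall f : Ar C, equivA f by case: Hk.
  have h0124 := H3 p0 p1 p2 p4 isT isT isT isT.
  have h0134 := H3 p0 p1 p3 p4 isT isT isT isT.
  have h0234 := H3 p0 p2 p3 p4 isT isT isT isT.
  have h1234 := H3 p1 p2 p3 p4 isT isT isT isT.
  apply: (enum4_5 (P := fun i j l o => G3 D i j l o)); try (by []).
  exact: (pent4 Hiso s01 t01 s02 t02 s03 t03 s04 t04 s12 t12 s13 t13 s14 t14 s23 t23 s24 t24 s34 t34 d012 c012 d013 c013 d014 c014 d023 c023 d024 c024 d034 c034 d123 c123 d124 c124 d134 c134 d234 c234 (Heq (dar D p3 p4)) h0124 h0234 h0134 h1234).
Qed.
End N4.


Lemma horn_wit n (k : 'I_n.+1) m (t : mono m n) (v : 'I_n.+1) :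
  v != k -> (forall a, t a != v) -> inHorn k t.
Proof. by move=> hv ht; apply/existsP; exists v; rewrite hv; apply/forallP. Qed.

Lemma maxo_in n (i j : 'I_n) : (maxo i j == i) || (maxo i j == j).
Proof. by rewrite /maxo; case: ifP; rewrite eqxx ?orbT. Qed.

Lemma tri_big n (k i j l : 'I_n.+1) : 3 < n -> inHorn k (tri i j l).
Proof.
move=> hn; apply: (@inHorn_small _ _ _ _ [:: i; j; l]) => // a.
case: a => [[|[|[|a]]] ha] //=; rewrite /trif /= !inE ?eqxx //.
  by case/orP: (maxo_in i j) => /eqP ->; rewrite eqxx ?orbT.
case/orP: (maxo_in (maxo i j) l) => /eqP ->; last by rewrite eqxx ?orbT.
by case/orP: (maxo_in i j) => /eqP ->; rewrite eqxx ?orbT.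
Qed.

Lemma tet_big n (k i j l o : 'I_n.+1) : 4 < n -> inHorn k (tet i j l o).
Proof.
move=> hn; apply: (@inHorn_small _ _ _ _ [:: i; j; l; o]) => // a.
have Hm : forall u v : 'I_n.+1, u \in [:: i; j; l; o] -> v \in [:: i; j; l; o] ->
   maxo u v \in [:: i; j; l; o].
  by move=> u v hu hv; case/orP: (maxo_in u v) => /eqP ->.
case: a => [[|[|[|[|a]]]] ha] //=; rewrite /tetf /maxo /=;
  repeat case: ifP => _; by rewrite !inE eqxx ?orbT.
Qed.

Lemma tri2_in n (k i j : 'I_n.+1) : 2 < n -> inHorn k (tri i j j).
Proof.
move=> hn; apply: (@inHorn_small _ _ _ _ [:: i; j]) => // a.
have Hm : forall u v : 'I_n.+1, u \in [:: i; j] -> v \in [:: i; j] -> maxo u v \in [:: i; j].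
  by move=> u v hu hv; case/orP: (maxo_in u v) => /eqP ->.
case: a => [[|[|[|a]]] ha] //=; rewrite /trif /maxo /=;
  repeat case: ifP => _; by rewrite !inE eqxx ?orbT.
Qed.

Lemma tri1_in n (k i : 'I_n.+1) : 1 < n -> inHorn k (tri i i i).
Proof.
move=> hn; apply: (@inHorn_small _ _ _ _ [:: i]) => // a.
case: a => [[|[|[|a]]] ha] //=; rewrite /trif /maxo /=;
  repeat case: ifP => _; by rewrite !inE eqxx.
Qed.

Lemma tet4_horn (k : 'I_5) : forall i j l o : 'I_5, i < j -> j < l -> l < o ->
  k \in [:: i; j; l; o] -> inHorn k (tet i j l o).
Proof.
apply: enum4_5 => hk.
- by apply: (@horn_wit _ _ _ _ p4); [apply: contraTneq hk => <- | move=> [[|[|[|[|a]]]] ha]].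
- by apply: (@horn_wit _ _ _ _ p3); [apply: contraTneq hk => <- | move=> [[|[|[|[|a]]]] ha]].
- by apply: (@horn_wit _ _ _ _ p2); [apply: contraTneq hk => <- | move=> [[|[|[|[|a]]]] ha]].
- by apply: (@horn_wit _ _ _ _ p1); [apply: contraTneq hk => <- | move=> [[|[|[|[|a]]]] ha]].
- by apply: (@horn_wit _ _ _ _ p0); [apply: contraTneq hk => <- | move=> [[|[|[|[|a]]]] ha]].
Qed.

Lemma tri3_horn (k : 'I_4) : forall i j l : 'I_4, i < j -> j < l ->
  k \in [:: i; j; l] -> inHorn k (tri i j l).
Proof.
apply: enum3_4 => hk.
- by apply: (@horn_wit _ _ _ _ q3); [apply: contraTneq hk => <- | move=> [[|[|[|a]]] ha]].
- by apply: (@horn_wit _ _ _ _ q2); [apply: contraTneq hk => <- | move=> [[|[|[|a]]] ha]].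
- by apply: (@horn_wit _ _ _ _ q1); [apply: contraTneq hk => <- | move=> [[|[|[|a]]] ha]].
- by apply: (@horn_wit _ _ _ _ q0); [apply: contraTneq hk => <- | move=> [[|[|[|a]]] ha]].
Qed.

Lemma tri_avoid4 (j k : 'I_4) : j != k -> forall i1 i2 i3 : 'I_4, i1 < i2 -> i2 < i3 ->
  i1 != j -> i2 != j -> i3 != j -> k \in [:: i1; i2; i3].
Proof.
move=> hjk; apply: enum3_4; case: j hjk => [[|[|[|[|j]]]] hj] //;
  case: k => [[|[|[|[|k]]]] hk] //.
Qed.

Lemma enum3_3 (P : 'I_3 -> 'I_3 -> 'I_3 -> Prop) : P t0 t1 t2 ->
  forall i j l : 'I_3, i < j -> j < l -> P i j l.
Proof.
move=> H [[|[|[|i]]] hi] [[|[|[|j]]] hj] [[|[|[|l]]] hl] //= _ _; by fixord.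
Qed.

Lemma no3_2 (i j l : 'I_2) : i < j -> j < l -> False.
Proof. move=> h1 h2; have := ltn_ord l; lia. Qed.

Lemma I2_eq (i j k : 'I_2) : j != k -> i != j -> i = k.
Proof.
move=> h1 h2; apply: val_inj; move: h1 h2.
by case: i j k => [[|[|?]] ?] [[|[|?]] ?] [[|[|?]] ?].
Qed.

Lemma I2_no (i i' j : 'I_2) : i != j -> i' != j -> i < i' -> False.
Proof. by case: i i' j => [[|[|?]] ?] [[|[|?]] ?] [[|[|?]] ?]. Qed.

Section Fill.
Variable C : TwoCat.
Hypothesis Hiso : forall a : Cl C, is_iso2 a.

Lemma fill_big N (k : 'I_N.+1) : 4 < N -> has_filler (nerve C) k.
Proof.
move=> hN x Hx; apply: (@fill_from C N k x Hx (Dx x)); last by move=> j _; split.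
split.
- by move=> i j _ _ lt; apply: (gx1 Hx lt); apply: tri_big; lia.
- by move=> i j l _ _ _ l1 l2; apply: (gx2 Hx l1 l2); apply: tri_big; lia.
- by move=> i j l o _ _ _ _ l1 l2 l3; apply: (gx3 Hx l1 l2 l3); apply: tet_big.
Qed.

Lemma fill4 (k : 'I_5) : (0 < k < 4) \/ (forall f : Ar C, equivA f) -> has_filler (nerve C) k.
Proof.
move=> Hk x Hx; apply: (@fill_from C 4 k x Hx (Dx x)); last by move=> j _; split.
apply: (penta4 Hiso Hk).
- by move=> i j lt; apply: (gx1 Hx lt); apply: tri_big.
- by move=> i j l l1 l2; apply: (gx2 Hx l1 l2); apply: tri_big.
- move=> i j l o l1 l2 l3 hk; apply: (gx3 Hx l1 l2 l3); exact: tet4_horn.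
Qed.

Lemma fill3 (k : 'I_4) : (0 < k < 3) \/ (forall f : Ar C, equivA f) -> has_filler (nerve C) k.
Proof.
move=> Hk x Hx.
have [D' [gD' [Eo Ea Ec]]] := @solve3 C Hiso k Hk (Dx x)
  (fun i j lt => gx1 Hx lt (tri2_in k i j isT))
  (fun i j l l1 l2 hk => gx2 Hx l1 l2 (tri3_horn l1 l2 hk)).
apply: (@fill_from C 3 k x Hx D' gD') => j hj; split.
- by move=> i _; rewrite Eo.
- by move=> i i' _ _ _; rewrite Ea.
- by move=> i1 i2 i3 P1 P2 P3 l1 l2; apply: Ec; exact: (tri_avoid4 hj l1 l2).
Qed.

Lemma fill2 (k : 'I_3) : (0 < k < 2) \/ (forall f : Ar C, equivA f) -> has_filler (nerve C) k.
Proof.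
move=> Hk x Hx.
have Hdc : forall (D : Data C 2) (j : 'I_3), agreeOn D (Dx x) (predC1 j) <->
  (forall i i', i != j -> i' != j -> i < i' -> dar D i i' = dar (Dx x) i i') /\
  (forall i, i != j -> dob D i = dob (Dx x) i).
  move=> D j; split; first by case=> h1 h2 _; split => *; [apply: h2|apply: h1].
  case=> h1 h2; split.
  - by move=> i Pi; apply: h2.
  - by move=> i i' Pi Pi' lt; apply: h1.
  move=> i1 i2 i3 P1 P2 P3 l1 l2; exfalso; clear h1 h2; move: P1 P2 P3; move: i1 i2 i3 l1 l2.
  apply: (enum3_3 (P := fun a b c => predC1 j a -> predC1 j b -> predC1 j c -> False)).
  by case: j => [[|[|[|?]]] ?].
have G3v : forall (D : Data C 2) (i j l o : 'I_3), i < j -> j < l -> l < o -> G3 D i j l o.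
  by move=> D i j l o l1 l2 l3; case: (no4_3 l1 l2 l3).
case: k Hk Hx => [[|[|[|k]]] hk] Hk Hx //.
-
  have Heq : forall f : Ar C, equivA f by case: Hk.
  have [s01 t01] : G1 (Dx x) t0 t1.
    apply: (@gx1 _ _ _ _ Hx t0 t1 isT); apply: (@horn_wit _ _ _ _ t2) => //; by move=> [[|[|[|a]]] ?].
  have [s02 t02] : G1 (Dx x) t0 t2.
    apply: (@gx1 _ _ _ _ Hx t0 t2 isT); apply: (@horn_wit _ _ _ _ t1) => //; by move=> [[|[|[|a]]] ?].
  have [g [sg tg _ [eta [de ce _]]]] := Heq (dar (Dx x) t0 t1).
  have [eta' [de' ce' _ _]] := iso_inv (Hiso eta).
  pose D := {| dob := dob (Dx x);
    dar := fun i j => if (i == t1) && (j == t2) then compA (dar (Dx x) t0 t2) g else dar (Dx x) i j;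
    dcl := fun _ _ _ => hcomp (id2 (dar (Dx x) t0 t2)) eta' |} : Data C 2.
  apply: (@fill_from C 2 _ x Hx D).
  + split.
    * move=> i j _ _; move: i j; apply: (enum2 (P := fun i j => G1 D i j)); rewrite /G1 /=.
      - by split.
      - by split.
      - by split; ty.
    * move=> i j l _ _ _; move: i j l; apply: (enum3_3 (P := fun i j l => G2 D i j l)).
      by rewrite /G2 /=; split; ty.
    * by move=> i j l o _ _ _ _; apply: G3v.
  + move=> j hj; apply/Hdc; split => //.
    move=> i i' Pi Pi' lt /=; case: ifP => // /andP [/eqP Ei /eqP Ei']; subst.
    by case: j hj Pi Pi' => [[|[|[|?]]] ?].
-
  have [s01 t01] : G1 (Dx x) t0 t1.
    apply: (@gx1 _ _ _ _ Hx t0 t1 isT); apply: (@horn_wit _ _ _ _ t2) => //; by move=> [[|[|[|a]]] ?].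
  have [s12 t12] : G1 (Dx x) t1 t2.
    apply: (@gx1 _ _ _ _ Hx t1 t2 isT); apply: (@horn_wit _ _ _ _ t0) => //; by move=> [[|[|[|a]]] ?].
  pose D := {| dob := dob (Dx x);
    dar := fun i j => if (i == t0) && (j == t2) then compA (dar (Dx x) t1 t2) (dar (Dx x) t0 t1)
                      else dar (Dx x) i j;
    dcl := fun _ _ _ => id2 (compA (dar (Dx x) t1 t2) (dar (Dx x) t0 t1)) |} : Data C 2.
  apply: (@fill_from C 2 _ x Hx D).
  + split.
    * move=> i j _ _; move: i j; apply: (enum2 (P := fun i j => G1 D i j)); rewrite /G1 /=.
      - by split.
      - by split; ty.
      - by split.
    * move=> i j l _ _ _; move: i j l; apply: (enum3_3 (P := fun i j l => G2 D i j l)).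
      by rewrite /G2 /=; split; ty.
    * by move=> i j l o _ _ _ _; apply: G3v.
  + move=> j hj; apply/Hdc; split => //.
    move=> i i' Pi Pi' lt /=; case: ifP => // /andP [/eqP Ei /eqP Ei']; subst.
    by case: j hj Pi Pi' => [[|[|[|?]]] ?].
-
  have Heq : forall f : Ar C, equivA f by case: Hk.
  have [s12 t12] : G1 (Dx x) t1 t2.
    apply: (@gx1 _ _ _ _ Hx t1 t2 isT); apply: (@horn_wit _ _ _ _ t0) => //; by move=> [[|[|[|a]]] ?].
  have [s02 t02] : G1 (Dx x) t0 t2.
    apply: (@gx1 _ _ _ _ Hx t0 t2 isT); apply: (@horn_wit _ _ _ _ t1) => //; by move=> [[|[|[|a]]] ?].
  have [g [sg tg [eps [de ce _]] _]] := Heq (dar (Dx x) t1 t2).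
  have [eps' [de' ce' _ _]] := iso_inv (Hiso eps).
  pose D := {| dob := dob (Dx x);
    dar := fun i j => if (i == t0) && (j == t1) then compA g (dar (Dx x) t0 t2) else dar (Dx x) i j;
    dcl := fun _ _ _ => hcomp eps' (id2 (dar (Dx x) t0 t2)) |} : Data C 2.
  apply: (@fill_from C 2 _ x Hx D).
  + split.
    * move=> i j _ _; move: i j; apply: (enum2 (P := fun i j => G1 D i j)); rewrite /G1 /=.
      - by split; ty.
      - by split.
      - by split.
    * move=> i j l _ _ _; move: i j l; apply: (enum3_3 (P := fun i j l => G2 D i j l)).
      by rewrite /G2 /=; split; ty.
    * by move=> i j l o _ _ _ _; apply: G3v.
  + move=> j hj; apply/Hdc; split => //.
    move=> i i' Pi Pi' lt /=; case: ifP => // /andP [/eqP Ei /eqP Ei']; subst.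
    by case: j hj Pi Pi' => [[|[|[|?]]] ?].
Qed.

Lemma fill1 (k : 'I_2) : has_filler (nerve C) k.
Proof.
move=> x Hx.
pose D := {| dob := fun _ => dob (Dx x) k; dar := fun _ _ => idA (dob (Dx x) k);
  dcl := fun _ _ _ => id2 (idA (dob (Dx x) k)) |} : Data C 1.
apply: (@fill_from C 1 _ x Hx D).
- split.
  + by move=> *; rewrite /G1 /= src_idA tgt_idA.
  + by move=> i j l _ _ _ l1 l2; case: (no3_2 l1 l2).
  + by move=> i j l o _ _ _ _ l1 l2; case: (no3_2 l1 l2).
- move=> j hj; split.
  + by move=> i Pi /=; rewrite (I2_eq hj Pi).
  + by move=> i i' Pi Pi' lt; case: (I2_no Pi Pi' lt).
  + by move=> i1 i2 i3 _ _ _ l1 l2; case: (no3_2 l1 l2).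
Qed.

Lemma fill_all n (k : 'I_n.+1) : 0 < n -> (0 < k < n) \/ (forall f : Ar C, equivA f) ->
  has_filler (nerve C) k.
Proof.
case: n k => [|[|[|[|[|n]]]]] k //= _ Hk.
- exact: fill1.
- exact: fill2.
- exact: fill3.
- exact: fill4.
- by apply: fill_big.
Qed.

Section DataOf.
Variable n : nat.
Variable P : NLax C n.
Implicit Types (i j l : 'I_n.+1).

Definition darOf i j : Ar C :=
  (match i <= j as b return (i <= j) = b -> Ar C with
   | true => fun h => nar P i j h | false => fun _ => idA (nob P i) end) erefl.

Lemma darOfE i j h : darOf i j = nar P i j h.
Proof.
rewrite /darOf.
have : forall b (e : (i <= j) = b), (match b as b0 return (i <= j) = b0 -> Ar C with
   | true => fun h => nar P i j h | false => fun _ => idA (nob P i) end) e = nar P i j h.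
  by case=> e; [apply: nar_cong | rewrite h in e].
by apply.
Qed.

Definition dclOf i j l : Cl C :=
  (match i <= j as b return (i <= j) = b -> Cl C with
   | true => fun h1 => (match j <= l as b return (j <= l) = b -> Cl C with
        | true => fun h2 => ncl P i j l h1 h2 | false => fun _ => id2 (idA (nob P i)) end) erefl
   | false => fun _ => id2 (idA (nob P i)) end) erefl.

Lemma dclOfE i j l h1 h2 : dclOf i j l = ncl P i j l h1 h2.
Proof.
rewrite /dclOf.
have : forall b (e : (i <= j) = b), (match b as b0 return (i <= j) = b0 -> Cl C with
   | true => fun h1 => (match j <= l as b return (j <= l) = b -> Cl C with
        | true => fun h2 => ncl P i j l h1 h2 | false => fun _ => id2 (idA (nob P i)) end) erefl
   | false => fun _ => id2 (idA (nob P i)) end) e = ncl P i j l h1 h2.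
  case=> e; last by rewrite h1 in e.
  have : forall b (e' : (j <= l) = b), (match b as b0 return (j <= l) = b0 -> Cl C with
        | true => fun h2 => ncl P i j l e h2 | false => fun _ => id2 (idA (nob P i)) end) e'
        = ncl P i j l h1 h2.
    by case=> e'; [apply: ncl_cong | rewrite h2 in e'].
  by apply.
by apply.
Qed.

Definition dataOf : Data C n := {| dob := nob P; dar := darOf; dcl := dclOf |}.

Lemma good_of : goodOn dataOf predT.
Proof.
split.
- move=> i j _ _ lt; rewrite /G1 /= (darOfE (ltnW lt)).
  by split; [apply: nar_src | apply: nar_tgt].
- move=> i j l _ _ _ l1 l2; have l3 := ltn_trans l1 l2.
  rewrite /G2 /= (dclOfE (ltnW l1) (ltnW l2)) (darOfE (ltnW l3)) (darOfE (ltnW l1)) (darOfE (ltnW l2)).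
  by split; [apply: ncl_dom | apply: ncl_cod].
- move=> i j l o _ _ _ _ l1 l2 l3.
  have l4 := ltn_trans l1 l2; have l5 := ltn_trans l2 l3.
  rewrite /G3 /coc /= (dclOfE (ltnW l2) (ltnW l3)) (dclOfE (ltnW l1) (ltnW l5))
    (dclOfE (ltnW l1) (ltnW l2)) (dclOfE (ltnW l4) (ltnW l3)) (darOfE (ltnW l1)) (darOfE (ltnW l3)).
  exact: ncl_assoc.
Qed.
End DataOf.

Lemma uniq_big N (k : 'I_N.+1) : 3 < N -> unique_filler (nerve C) k.
Proof.
move=> hN x z z' Hx Hz He Hz' He'; apply: (sm_unique Hz Hz'); apply: strict_det.
- by move=> i; rewrite (fz_ob Hz He) ?(fz_ob Hz' He') //; apply: tri_big.
- by move=> i j h _; rewrite (fz_ar Hz He) ?(fz_ar Hz' He') //; apply: tri_big.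
- by move=> i j l h1 h2 _ _; rewrite (fz_cl Hz He) ?(fz_cl Hz' He') //; apply: tri_big.
Qed.

Lemma uniq3' (k : 'I_4) : (0 < k < 3) \/ (forall f : Ar C, equivA f) -> unique_filler (nerve C) k.
Proof.
move=> Hk x z z' Hx Hz He Hz' He'; apply: (sm_unique Hz Hz').
set P := z 3 (idm 3); set P' := z' 3 (idm 3).
have E := @uniq3 C Hiso k Hk (dataOf P) (dataOf P') (good_of P) (good_of P').
have Eo : forall i, nob P i = nob P' i.
  by move=> i; rewrite (fz_ob Hz He) ?(fz_ob Hz' He') //; apply: tri1_in.
apply: strict_det => //.
- by move=> i j h _; rewrite (fz_ar Hz He) ?(fz_ar Hz' He') //; apply: tri2_in.
- move=> i j l h1 h2 l1 l2; rewrite -(dclOfE P h1 h2) -(dclOfE P' h1 h2); apply: E => //.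
  + move=> i1 i2 lt /=; rewrite (darOfE P (ltnW lt)) (darOfE P' (ltnW lt)).
    by rewrite (fz_ar Hz He) ?(fz_ar Hz' He') //; apply: tri2_in.
  + move=> i1 i2 i3 m1 m2 hk /=; rewrite (dclOfE P (ltnW m1) (ltnW m2)) (dclOfE P' (ltnW m1) (ltnW m2)).
    by rewrite (fz_cl Hz He) ?(fz_cl Hz' He') //; apply: tri3_horn.
Qed.

Lemma uniq_all n (k : 'I_n.+1) : 2 < n -> (0 < k < n) \/ (forall f : Ar C, equivA f) ->
  unique_filler (nerve C) k.
Proof.
case: n k => [|[|[|[|n]]]] k //= _ Hk.
- exact: uniq3'.
- by apply: uniq_big.
Qed.
End Fill.


Lemma enum2_4 (P : 'I_4 -> 'I_4 -> Prop) : P q0 q1 -> P q0 q2 -> P q0 q3 -> P q1 q2 -> P q1 q3 -> P q2 q3 ->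
  forall i j : 'I_4, i < j -> P i j.
Proof.
move=> H1 H2 H3 H4 H5 H6 [[|[|[|[|i]]]] hi] [[|[|[|[|j]]]] hj] //= _; by fixord.
Qed.

Section Conv.
Variable C : TwoCat.

Definition mk3 (o0 o1 o2 o3 : Ob C) (f01 f02 f03 f12 f13 f23 : Ar C) (a012 a013 a023 a123 : Cl C) :
  Data C 3 :=
  {| dob := fun i => match val i with 0 => o0 | 1 => o1 | 2 => o2 | _ => o3 end;
     dar := fun i j => match val i, val j with 0, 1 => f01 | 0, 2 => f02 | 0, 3 => f03
        | 1, 2 => f12 | 1, 3 => f13 | 2, 3 => f23 | _, _ => f01 end;
     dcl := fun i j l => match val i, val j, val l with 0, 1, 2 => a012 | 0, 1, 3 => a013
        | 0, 2, 3 => a023 | 1, 2, 3 => a123 | _, _, _ => a012 end |}.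

Definition mk2 (o0 o1 o2 : Ob C) (f01 f02 f12 : Ar C) (a : Cl C) : Data C 2 :=
  {| dob := fun i => match val i with 0 => o0 | 1 => o1 | _ => o2 end;
     dar := fun i j => match val i, val j with 0, 1 => f01 | 0, 2 => f02 | 1, 2 => f12
        | _, _ => f01 end;
     dcl := fun _ _ _ => a |}.

Section Mk3.
Variables (o0 o1 o2 o3 : Ob C) (f01 f02 f03 f12 f13 f23 : Ar C) (a012 a013 a023 a123 : Cl C).
Hypotheses (s01 : src f01 = o0) (t01 : tgt f01 = o1) (s02 : src f02 = o0) (t02 : tgt f02 = o2)
  (s03 : src f03 = o0) (t03 : tgt f03 = o3) (s12 : src f12 = o1) (t12 : tgt f12 = o2)
  (s13 : src f13 = o1) (t13 : tgt f13 = o3) (s23 : src f23 = o2) (t23 : tgt f23 = o3).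
Hypotheses (d012 : dom2 a012 = f02) (c012 : cod2 a012 = compA f12 f01)
 (d013 : dom2 a013 = f03) (c013 : cod2 a013 = compA f13 f01)
 (d123 : dom2 a123 = f13) (c123 : cod2 a123 = compA f23 f12).

Let D := mk3 o0 o1 o2 o3 f01 f02 f03 f12 f13 f23 a012 a013 a023 a123.

Lemma mk3_G1 : forall i j : 'I_4, i < j -> G1 D i j.
Proof using All.
by apply: (enum2_4 (P := fun i j => G1 D i j)); rewrite /G1 /=; split.
Qed.

Lemma mk3_face : forall j : 'I_4, j != q1 -> goodOn D (predC1 j).
Proof using All.
move=> j hj; split.
- by move=> i i' _ _; apply: mk3_G1.
- move=> i1 i2 i3 P1 P2 P3 l1 l2; move: P1 P2 P3; move: i1 i2 i3 l1 l2.
  apply: (enum3_4 (P := fun a b c => predC1 j a -> predC1 j b -> predC1 j c -> G2 D a b c));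
    rewrite /G2 /= => P1 P2 P3; try by split.
  by case: j hj P1 P2 P3 => [[|[|[|[|?]]]] ?].
- move=> i1 i2 i3 i4 P1 P2 P3 P4 l1 l2 l3; exfalso; move: P1 P2 P3 P4; move: i1 i2 i3 i4 l1 l2 l3.
  apply: (enum4_4 (P := fun a b c d => predC1 j a -> predC1 j b -> predC1 j c -> predC1 j d -> False)).
  by case: j hj => [[|[|[|[|?]]]] ?].
Qed.

Hypotheses (d023 : dom2 a023 = f03) (c023 : cod2 a023 = compA f23 f02)
  (E : coc f01 f23 a123 a013 a012 a023).

Lemma mk3_good : goodOn D predT.
Proof using All.
split.
- by move=> i i' _ _; apply: mk3_G1.
- move=> i1 i2 i3 _ _ _; move: i1 i2 i3.
  by apply: (enum3_4 (P := fun a b c => G2 D a b c)); rewrite /G2 /=; split.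
- move=> i1 i2 i3 i4 _ _ _ _; move: i1 i2 i3 i4.
  by apply: (enum4_4 (P := fun a b c d => G3 D a b c d)); rewrite /G3 /=.
Qed.
End Mk3.
End Conv.

Section CatIso.
Variable C : TwoCat.

Lemma coc_aux (al : Cl C) (x y : Ob C) (f g : Ar C) :
  dom2 al = f -> cod2 al = g -> src f = x -> tgt f = y -> src g = x -> tgt g = y ->
  vcomp (hcomp (id2 g) (id2 (idA x))) al = al /\ hcomp (id2 (idA y)) al = al.
Proof.
move=> da ca sf tf sg tg; split.
- rw hcomp_id2; rw compA_idr'; rw vcomp_idl'.
- rw hcomp_idl'.
Qed.

Lemma cat_iso : is_weak_cat (nerve C) 2 -> forall a : Cl C, is_iso2 a.
Proof.
move=> Hwc al.
have [Hf Hu] := Hwc 3 q1 isT; have {Hu} Hu := Hu isT.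
set f := dom2 al; set g := cod2 al; set x := src f; set y := tgt f.
have sg : src g = x by rewrite /g src_cod2.
have tg : tgt g = y by rewrite /g tgt_cod2.
have sf : src f = x by []. have tf : tgt f = y by [].
have df : dom2 al = f by []. have cg : cod2 al = g by [].
have six : src (idA x) = x by ty. have tix : tgt (idA x) = x by ty.
have siy : src (idA y) = y by ty. have tiy : tgt (idA y) = y by ty.
have c012 : cod2 al = compA g (idA x) by ty.
have dg : dom2 (id2 g) = g by ty.
have c013 : cod2 (id2 g) = compA g (idA x) by ty.
have c123 : cod2 (id2 g) = compA (idA y) g by ty.
have HD1 : forall j : 'I_4, j != q1 ->
  goodOn (mk3 x x y y (idA x) f g g g (idA y) al (id2 g) (id2 g) (id2 g)) (predC1 j).
  exact: (mk3_face (id2 g) six tix sf tf sg tg sg tg sg tg siy tiy df c012 dg c013 dg c123).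
have [z [Hz He]] := Hf (hornx HD1) (hornx_map HD1).
set P := z 3 (idm 3).
have a01 := @hz_ar C 3 q1 _ HD1 z Hz He q0 q1 isT isT (@tri2_in 3 q1 q0 q1 isT).
have a02 := @hz_ar C 3 q1 _ HD1 z Hz He q0 q2 isT isT (@tri2_in 3 q1 q0 q2 isT).
have a03 := @hz_ar C 3 q1 _ HD1 z Hz He q0 q3 isT isT (@tri2_in 3 q1 q0 q3 isT).
have a12 := @hz_ar C 3 q1 _ HD1 z Hz He q1 q2 isT isT (@tri2_in 3 q1 q1 q2 isT).
have a23 := @hz_ar C 3 q1 _ HD1 z Hz He q2 q3 isT isT (@tri2_in 3 q1 q2 q3 isT).
have b012 := @hz_cl C 3 q1 _ HD1 z Hz He q0 q1 q2 isT isT isT isT (@tri3_horn q1 q0 q1 q2 isT isT isT).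
have b013 := @hz_cl C 3 q1 _ HD1 z Hz He q0 q1 q3 isT isT isT isT (@tri3_horn q1 q0 q1 q3 isT isT isT).
have b123 := @hz_cl C 3 q1 _ HD1 z Hz He q1 q2 q3 isT isT isT isT (@tri3_horn q1 q1 q2 q3 isT isT isT).
rewrite /= in a01 a02 a03 a12 a23 b012 b013 b123.
set be := ncl P q0 q2 q3 isT isT.
have db : dom2 be = g by rewrite /be (ncl_dom _ _ _ _ _ _ _ _ (isT : q0 <= q3)) a03.
have cb : cod2 be = f by rewrite /be ncl_cod a23 a02; ty.
have A := @ncl_assoc C 3 P q0 q1 q2 q3 isT isT isT isT isT.
rewrite b123 a01 b013 a23 b012 -/be in A.
have [L R] := coc_aux df cg sf tf sg tg.
have L0 : vcomp (hcomp (id2 g) (id2 (idA x))) (id2 g) = id2 g.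
  rw hcomp_id2; rw compA_idr'; rw vcomp_idl'.
have E1 : vcomp al be = id2 g by rewrite -L0 A R.
have HD2 : forall j : 'I_4, j != q1 ->
  goodOn (mk3 x x y y (idA x) f f g g (idA y) al al (id2 g) (id2 g)) (predC1 j).
  exact: (mk3_face (id2 g) six tix sf tf sf tf sg tg sg tg siy tiy df c012 df c012 dg c123).
have df' : dom2 (id2 f) = f by ty.
have cf' : cod2 (id2 f) = compA (idA y) f by ty.
have gA : goodOn (mk3 x x y y (idA x) f f g g (idA y) al al (id2 f) (id2 g)) predT.
  apply: (mk3_good six tix sf tf sf tf sg tg sg tg siy tiy df c012 df c012 dg c123 df' cf').
  by rewrite /coc L R vcomp_idr'.
have dba : dom2 (vcomp be al) = f by ty.
have cba : cod2 (vcomp be al) = compA (idA y) f by ty.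
have gB : goodOn (mk3 x x y y (idA x) f f g g (idA y) al al (vcomp be al) (id2 g)) predT.
  apply: (mk3_good six tix sf tf sf tf sg tg sg tg siy tiy df c012 df c012 dg c123 dba cba).
  rewrite /coc L R vcomp_assoc ?E1; try ty.
  by rw vcomp_idl'.
have Ag : forall Z, forall j : 'I_4, j != q1 ->
    agreeOn (mk3 x x y y (idA x) f f g g (idA y) al al Z (id2 g))
            (mk3 x x y y (idA x) f f g g (idA y) al al (id2 g) (id2 g)) (predC1 j).
  move=> Z j hj; split => //.
  move=> i1 i2 i3 P1 P2 P3 l1 l2; move: P1 P2 P3; move: i1 i2 i3 l1 l2.
  apply: (enum3_4 (P := fun a b c => predC1 j a -> predC1 j b -> predC1 j c -> _)) => //=.
  by case: j hj => [[|[|[|[|?]]]] ?].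
have EE := Hu _ _ _ (hornx_map HD2) (mk_simplex gA) (mk_extends HD2 gA (Ag _))
   (mk_simplex gB) (mk_extends HD2 gB (Ag _)) 3 (idm 3).
have E2 := f_equal (fun Q => ncl Q q0 q2 q3 isT isT) EE.
rewrite /= /nclN /= in E2.
by exists be; split.
Qed.
End CatIso.

Section GrpdEq.
Variable C : TwoCat.
Hypothesis Hiso : forall a : Cl C, is_iso2 a.

Lemma grpd_equiv : is_weak_grpd (nerve C) 2 -> forall f : Ar C, equivA f.
Proof.
move=> Hwg f.
set x := src f; set y := tgt f.
have sf : src f = x by []. have tf : tgt f = y by [].
have [Hf0 _] := Hwg 2 t0 isT.
have [Hf2 _] := Hwg 2 t2 isT.
have HD : forall j : 'I_3, j != t0 ->
    goodOn (mk2 x y x f (idA x) (idA y) (id2 (idA x))) (predC1 j).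
  move=> j hj; split.
  - move=> i i' Pi Pi' lt; move: Pi Pi'; move: i i' lt.
    apply: (enum2 (P := fun a b => predC1 j a -> predC1 j b -> G1 _ a b)); rewrite /G1 /= => P1 P2;
      first [by split; ty | by case: j hj P1 P2 => [[|[|[|?]]] ?]].
  - move=> i1 i2 i3 P1 P2 P3 l1 l2; exfalso; move: P1 P2 P3; move: i1 i2 i3 l1 l2.
    apply: (enum3_3 (P := fun a b c => predC1 j a -> predC1 j b -> predC1 j c -> False)).
    by case: j hj => [[|[|[|?]]] ?].
  - by move=> i1 i2 i3 i4 _ _ _ _ l1 l2 l3; case: (no4_3 l1 l2 l3).
have [z [Hz He]] := Hf0 (hornx HD) (hornx_map HD).
set P := z 2 (idm 2).
have o1 : nob P t1 = y.
  apply: (@hz_ob C 2 t0 _ HD z Hz He t1).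
  by apply: (@horn_wit _ _ _ _ t2) => //; move=> [[|[|[|a]]] ?].
have o2 : nob P t2 = x.
  apply: (@hz_ob C 2 t0 _ HD z Hz He t2).
  by apply: (@horn_wit _ _ _ _ t1) => //; move=> [[|[|[|a]]] ?].
have a01 : nar P t0 t1 isT = f.
  apply: (@hz_ar C 2 t0 _ HD z Hz He t0 t1 isT isT).
  by apply: (@horn_wit _ _ _ _ t2) => //; move=> [[|[|[|a]]] ?].
have a02 : nar P t0 t2 isT = idA x.
  apply: (@hz_ar C 2 t0 _ HD z Hz He t0 t2 isT isT).
  by apply: (@horn_wit _ _ _ _ t1) => //; move=> [[|[|[|a]]] ?].
set g := nar P t1 t2 isT.
have sg : src g = y by rewrite /g nar_src o1.
have tg : tgt g = x by rewrite /g nar_tgt o2.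
set c := ncl P t0 t1 t2 isT isT.
have dc : dom2 c = idA x by rewrite /c (ncl_dom _ _ _ _ _ _ _ _ (isT : t0 <= t2)) a02.
have cc : cod2 c = compA g f by rewrite /c ncl_cod a01.
have HD' : forall j : 'I_3, j != t2 ->
    goodOn (mk2 y x y (idA y) (idA y) f (id2 (idA y))) (predC1 j).
  move=> j hj; split.
  - move=> i i' Pi Pi' lt; move: Pi Pi'; move: i i' lt.
    apply: (enum2 (P := fun a b => predC1 j a -> predC1 j b -> G1 _ a b)); rewrite /G1 /= => P1 P2;
      first [by split; ty | by case: j hj P1 P2 => [[|[|[|?]]] ?]].
  - move=> i1 i2 i3 P1 P2 P3 l1 l2; exfalso; move: P1 P2 P3; move: i1 i2 i3 l1 l2.
    apply: (enum3_3 (P := fun a b c => predC1 j a -> predC1 j b -> predC1 j c -> False)).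
    by case: j hj => [[|[|[|?]]] ?].
  - by move=> i1 i2 i3 i4 _ _ _ _ l1 l2 l3; case: (no4_3 l1 l2 l3).
have [z' [Hz' He']] := Hf2 (hornx HD') (hornx_map HD').
set P' := z' 2 (idm 2).
have o0' : nob P' t0 = y.
  apply: (@hz_ob C 2 t2 _ HD' z' Hz' He' t0).
  by apply: (@horn_wit _ _ _ _ t1) => //; move=> [[|[|[|a]]] ?].
have o1' : nob P' t1 = x.
  apply: (@hz_ob C 2 t2 _ HD' z' Hz' He' t1).
  by apply: (@horn_wit _ _ _ _ t0) => //; move=> [[|[|[|a]]] ?].
have a12' : nar P' t1 t2 isT = f.
  apply: (@hz_ar C 2 t2 _ HD' z' Hz' He' t1 t2 isT isT).
  by apply: (@horn_wit _ _ _ _ t0) => //; move=> [[|[|[|a]]] ?].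
have a02' : nar P' t0 t2 isT = idA y.
  apply: (@hz_ar C 2 t2 _ HD' z' Hz' He' t0 t2 isT isT).
  by apply: (@horn_wit _ _ _ _ t1) => //; move=> [[|[|[|a]]] ?].
set g' := nar P' t0 t1 isT.
have sg' : src g' = y by rewrite /g' nar_src o0'.
have tg' : tgt g' = x by rewrite /g' nar_tgt o1'.
set c' := ncl P' t0 t1 t2 isT isT.
have dc' : dom2 c' = idA y by rewrite /c' (ncl_dom _ _ _ _ _ _ _ _ (isT : t0 <= t2)) a02'.
have cc' : cod2 c' = compA f g' by rewrite /c' ncl_cod a12'.
have [eta [deta ceta _ _]] := iso_inv (Hiso c).
have [c3 [d3 cc3 _ _]] := iso_inv (Hiso c').
rewrite cc in deta; rewrite dc in ceta; rewrite cc' in d3; rewrite dc' in cc3.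
exists g; split => //.
- exists (vcomp c3 (vcomp (hcomp (hcomp (id2 f) eta) (id2 g')) (hcomp (id2 (compA f g)) c'))).
  split; [ty | ty | exact: Hiso].
- by exists eta; split => //; exact: Hiso.
Qed.
End GrpdEq.

Theorem mainTheorem2 (C : TwoCat) :
  (is_weak_cat (nerve C) 2 <-> forall a : Cl C, is_iso2 a) /\
  (is_weak_grpd (nerve C) 2 <-> is_2groupoid C).
Proof.
have cat_of_iso : (forall a : Cl C, is_iso2 a) -> is_weak_cat (nerve C) 2.
  move=> Hiso n k hk; have hn : 0 < n by case/andP: hk => h1 h2; apply: (leq_ltn_trans (leq0n k) h2).
  split; first by apply: (fill_all Hiso hn); left.
  by move=> h2; apply: (uniq_all Hiso h2); left.
split; split.
- exact: cat_iso.
- exact: cat_of_iso.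
- move=> Hwg.
  have Hwc : is_weak_cat (nerve C) 2.
    move=> n k hk; apply: Hwg.
    by case/andP: hk => h1 h2; apply: (leq_ltn_trans (leq0n k) h2).
  have Hiso := cat_iso Hwc.
  by split => //; apply: grpd_equiv.
- case=> Hiso Heq n k hn; split; first by apply: (fill_all Hiso hn); right.
  by move=> h2; apply: (uniq_all Hiso h2); right.
Qed.
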